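(* Let $k\in\{1,\dots,N-1\}$. Let $(q^n)$, with $q^n=(\zeta^n_i,z^n_i)_{i\in\mathbf N}$, be a sequence of simple choreographic loops in $\Lambda$ satisfying $[z^n_0]=0$. Suppose $\|q^n\|_{H^1}\to\infty$ while $\mathcal A_k(q^n;2\pi)$ stays bounded. Then: (a) $\|z^n_i\|_{H^1}$ is bounded uniformly in $i$ and $n$; (b) for each $i\in\mathbf N$, $|\zeta^n_i(t)|\to\infty$ uniformly in $t\in\mathbb R$; (c) after passing to a subsequence, for each $i\in\mathbf N$ there is $u_i\in\mathbb C$ with $|u_i|=1$ such that $\zeta_i^n(t)/|\zeta_i^n(t)|\to e^{-\mathrm ikt}u_i$ uniformly on $\mathbb R$.
   Context: Fix $N\ge2$ and $\mathbf N=\{0,\dots,N-1\}$. Positions are $q_i=(\zeta_i,z_i)\in\mathbb C\times\mathbb R$ with $\zeta_i=x_i+\mathrm iy_i$. - Loop space: $\Lambda=H^1(\mathbb R/2\pi\mathbb Z,\mathbb R^{3N})$. - Simple choreographic loops: a loop $q\in\Lambda$ is simple choreographic if $q_i(t)=q_0(t+2\pi i/N)$ for all $i,t$. - Potential: $U(q)=\sum_{i<j}1/|q_i-q_j|$. - Rotating-frame action: $\mathcal A_\omega(q;T)=\int_0^T\big(\tfrac12\sum_i(|\dot\zeta_i+\mathrm i\omega\zeta_i|^2+\dot z_i^2)+U(q)\big)dt$. - Mean: $[z_0]=\frac1{2\pi}\int_0^{2\pi}z_0$. *)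

(* Defs.v *)
From Stdlib Require Import Reals Lra Lia ZArith ClassicalEpsilon.
Open Scope R_scope.

Fixpoint rsum (n : nat) (f : nat -> R) : R :=
  match n with O => 0 | S p => rsum p f + f p end.

(* Riemann integral over [0, 2*pi] (value chosen when the integrand is
   Riemann integrable; all integrands used below are continuous). *)
Definition Rint (f : R -> R) : R :=
  epsilon (inhabits 0)
    (fun v => exists pr : Riemann_integrable f 0 (2 * PI), RiemannInt pr = v).

(* Fourier coefficient c_m (m in Z) of the complex function x + i y,
   c_m = (1/2pi) int_0^{2pi} (x + i y) e^{-imt} dt, written via its real
   and imaginary parts. *)
Definition fc (f : R -> R) (m : Z) : R := / (2 * PI) * Rint (fun t => f t * cos (IZR m * t)).
Definition fs (f : R -> R) (m : Z) : R := / (2 * PI) * Rint (fun t => f t * sin (IZR m * t)).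
Definition cabs2 (x y : R -> R) (m : Z) : R :=
  (fc x m + fs y m) ^ 2 + (fc y m - fs x m) ^ 2.   (* |c_m|^2 *)

Definition zpart (g : Z -> R) (M : nat) : R :=
  sum_f_R0 (fun j => g (Z.of_nat j - Z.of_nat M)%Z) (2 * M).
Definition zsummable (g : Z -> R) : Prop := exists l, Un_cv (zpart g) l.
Definition zsum (g : Z -> R) : R := epsilon (inhabits 0) (fun l => Un_cv (zpart g) l).

(* H^1 norm of a 2pi-periodic complex function x + i y (Parseval):
   ||f||_{H^1}^2 = int |f|^2 + int |f'|^2 = 2 pi sum_m (1+m^2)|c_m|^2. *)
Definition H1_weight (x y : R -> R) (m : Z) : R := (1 + IZR m ^ 2) * cabs2 x y m.
Definition H1sq (x y : R -> R) : R := 2 * PI * zsum (H1_weight x y).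
Definition zero_fun : R -> R := fun _ => 0.
Definition H1norm_real (f : R -> R) : R := sqrt (H1sq f zero_fun).

(* an H^1 2pi-periodic real function (continuous representative) *)
Definition in_H1 (f : R -> R) : Prop :=
  continuity f /\ (forall t, f (t + 2 * PI) = f t) /\ zsummable (H1_weight f zero_fun).

(* A loop: positions q_i(t) = (zeta_i(t), z_i(t)), zeta_i = x_i + i y_i. *)
Record loop := mkLoop { lx : nat -> R -> R; ly : nat -> R -> R; lz : nat -> R -> R }.

Definition in_Lambda (N : nat) (q : loop) : Prop :=
  forall i, (i < N)%nat -> in_H1 (lx q i) /\ in_H1 (ly q i) /\ in_H1 (lz q i).

Definition H1norm_loop (N : nat) (q : loop) : R :=
  sqrt (rsum N (fun i => H1sq (lx q i) (ly q i) + H1sq (lz q i) zero_fun)).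

Definition simple_choreographic (N : nat) (q : loop) : Prop :=
  forall i t, (i < N)%nat ->
    lx q i t = lx q 0 (t + 2 * PI * INR i / INR N) /\
    ly q i t = ly q 0 (t + 2 * PI * INR i / INR N) /\
    lz q i t = lz q 0 (t + 2 * PI * INR i / INR N).

Definition mean (f : R -> R) : R := / (2 * PI) * Rint f.

Definition dist3 (q : loop) (i j : nat) (t : R) : R :=
  sqrt ((lx q i t - lx q j t) ^ 2 + (ly q i t - ly q j t) ^ 2 + (lz q i t - lz q j t) ^ 2).

(* truncated potential U_M(q) = sum_{i<j} 1 / max(|q_i - q_j|, 1/(M+1));
   U_M increases to U as M -> oo, so int U = sup_M int U_M (monotone conv.). *)
Definition U_trunc (N : nat) (q : loop) (M : nat) (t : R) : R :=
  rsum N (fun i => rsum N (fun j =>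
    if Nat.ltb i j then / Rmax (dist3 q i j t) (/ INR (S M)) else 0)).

(* int_0^{2pi} |dzeta + i w zeta|^2 = 2pi sum_m (m + w)^2 |c_m|^2 *)
Definition kin (w : R) (x y : R -> R) : R :=
  2 * PI * zsum (fun m => (IZR m + w) ^ 2 * cabs2 x y m).

(* A_w(q; 2pi) with U replaced by U_M; A_w(q;2pi) = sup_M action_trunc w N q M *)
Definition action_trunc (w : R) (N : nat) (q : loop) (M : nat) : R :=
  / 2 * rsum N (fun i => kin w (lx q i) (ly q i) + kin 0 (lz q i) zero_fun)
  + Rint (U_trunc N q M).

Definition cnorm (x y : R) : R := sqrt (x ^ 2 + y ^ 2).

(* Main.v *)
Require Import Defs.
From Stdlib Require Import Reals Lra Lia ZArith ClassicalEpsilon FunctionalExtensionality.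
From Coquelicot Require Import Coquelicot.
Open Scope R_scope.

Lemma zpart_S g M : zpart g (S M) =
  zpart g M + g (- (Z.of_nat M + 1))%Z + g (Z.of_nat M + 1)%Z.
Proof.
  unfold zpart.
  replace (2 * S M)%nat with (S (S (2 * M))) by lia.
  rewrite decomp_sum by lia. change (Init.Nat.pred (S (S (2 * M)))) with (S (2 * M)).
  rewrite tech5.
  replace (Z.of_nat 0 - Z.of_nat (S M))%Z with (- (Z.of_nat M + 1))%Z by lia.
  replace (Z.of_nat (S (S (2 * M))) - Z.of_nat (S M))%Z with (Z.of_nat M + 1)%Z by lia.
  rewrite (sum_eq _ (fun j => g (Z.of_nat j - Z.of_nat M)%Z)).
  - lra.
  - intros i _. f_equal. lia.
Qed.

Lemma zpart_0 g : zpart g 0 = g 0%Z.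
Proof. reflexivity. Qed.

Lemma zpart_ext g h M : (forall m, g m = h m) -> zpart g M = zpart h M.
Proof. intro H. unfold zpart. apply sum_eq. intros; apply H. Qed.

Lemma zpart_plus g h M : zpart (fun m => g m + h m) M = zpart g M + zpart h M.
Proof. unfold zpart. apply sum_plus. Qed.

Lemma zpart_scal c g M : zpart (fun m => c * g m) M = c * zpart g M.
Proof. unfold zpart. rewrite scal_sum. apply sum_eq. intros; ring. Qed.

Lemma zpart_le g h M : (forall m, g m <= h m) -> zpart g M <= zpart h M.
Proof. intro H. unfold zpart. apply sum_Rle. intros; apply H. Qed.

Lemma zpart_nonneg g M : (forall m, 0 <= g m) -> 0 <= zpart g M.
Proof. intro H. induction M. rewrite zpart_0; auto. rewrite zpart_S.
  specialize (H (- (Z.of_nat M + 1))%Z) as H1. specialize (H (Z.of_nat M + 1)%Z). lra. Qed.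

Lemma zpart_grow g M : (forall m, 0 <= g m) -> zpart g M <= zpart g (S M).
Proof. intro H. rewrite zpart_S.
  specialize (H (- (Z.of_nat M + 1))%Z) as H1. specialize (H (Z.of_nat M + 1)%Z). lra. Qed.

Lemma zpart_mono g M M' : (forall m, 0 <= g m) -> (M <= M')%nat -> zpart g M <= zpart g M'.
Proof. intros H HM. induction HM. lra. pose proof (zpart_grow g m H). lra. Qed.

Lemma zpart_neg g M : zpart (fun m => g (- m)%Z) M = zpart g M.
Proof. induction M. rewrite !zpart_0. reflexivity.
  rewrite !zpart_S, IHM. rewrite Z.opp_involutive. lra. Qed.

Lemma zpart_delta (m0 : Z) a M : zpart (fun m => if Z.eq_dec m m0 then a else 0) M =
  if Z_le_dec (Z.abs m0) (Z.of_nat M) then a else 0.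
Proof. induction M.
  - rewrite zpart_0. destruct (Z.eq_dec 0 m0); destruct (Z_le_dec (Z.abs m0) (Z.of_nat 0)); auto; lia.
  - rewrite zpart_S, IHM.
    destruct (Z_le_dec (Z.abs m0) (Z.of_nat M)); destruct (Z_le_dec (Z.abs m0) (Z.of_nat (S M)));
    destruct (Z.eq_dec (- (Z.of_nat M + 1)) m0); destruct (Z.eq_dec (Z.of_nat M + 1) m0); try lra; lia.
Qed.

Lemma zpart_invsq M : zpart (fun m => / (1 + IZR m ^ 2)) M <= 5 - 4 / (INR M + 1).
Proof. induction M.
  - rewrite zpart_0. replace (1 + IZR 0 ^ 2) with 1 by (simpl; ring). rewrite Rinv_1. simpl INR. lra.
  - rewrite zpart_S. rewrite opp_IZR. rewrite plus_IZR, <- INR_IZR_INZ. rewrite S_INR.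
    set (x := INR M) in *. assert (0 <= x) by apply pos_INR.
    replace ((- (x + 1)) ^ 2) with ((x+1)^2) by ring.
    assert (/ (1 + (x + 1) ^ 2) <= 2 / ((x + 1) * (x + 2))).
    { apply Rmult_le_reg_r with ((1 + (x + 1) ^ 2) * ((x + 1) * (x + 2))). nra.
      field_simplify; try nra. }
    assert (4 / (x+1) - 4 / (x + 1 + 1) = 4 / ((x + 1) * (x + 2))) by (field; lra).
    assert (2 / ((x + 1) * (x + 2)) + 2 / ((x + 1) * (x + 2)) = 4 / ((x + 1) * (x + 2))) by (field; lra).
    lra.
Qed.

Lemma zpart_invsq5 M : zpart (fun m => / (1 + IZR m ^ 2)) M <= 5.
Proof. pose proof (zpart_invsq M). assert (0 < 4 / (INR M + 1)).
  { apply Rdiv_lt_0_compat. lra. pose proof (pos_INR M); lra. } lra. Qed.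

Lemma zsum_bound g B : (forall m, 0 <= g m) -> (forall M, zpart g M <= B) ->
  zsummable g /\ zsum g <= B /\ (forall M, zpart g M <= zsum g) /\ 0 <= zsum g.
Proof.
  intros H0 HB.
  assert (Hg : Un_growing (zpart g)) by (intro n; apply zpart_grow; auto).
  destruct (growing_cv (zpart g) Hg) as [l Hl].
  { exists B. intros x [n ->]. apply HB. }
  assert (Hs : zsummable g) by (exists l; exact Hl).
  assert (Hz : zsum g = l).
  { unfold zsum. apply UL_sequence with (zpart g); auto.
    apply (epsilon_spec (inhabits 0) (fun l => Un_cv (zpart g) l) (ex_intro _ l Hl)). }
  rewrite Hz.
  assert (Hle : forall M, zpart g M <= l) by (apply growing_ineq; auto).
  split; [auto|]. split; [|split]; auto.
  - destruct (Rle_lt_dec l B) as [h|h]; auto.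
    destruct (Hl (l - B)) as [n Hn]. lra.
    specialize (Hn n (le_n n)). specialize (HB n). unfold Rdist in Hn.
    rewrite Rabs_left1 in Hn; lra.
  - specialize (Hle 0%nat). rewrite zpart_0 in Hle. specialize (H0 0%Z). lra.
Qed.

Lemma zsum_summable g : (forall m, 0 <= g m) -> zsummable g ->
  (forall M, zpart g M <= zsum g) /\ 0 <= zsum g.
Proof.
  intros H0 [l Hl].
  assert (Hle : forall M, zpart g M <= l) by (apply growing_ineq; auto; intro n; apply zpart_grow; auto).
  destruct (zsum_bound g l H0 Hle) as (_ & _ & ? & ?). auto.
Qed.

Lemma zsum_le_of g B : (forall m, 0 <= g m) -> zsummable g -> (forall M, zpart g M <= B) -> zsum g <= B.
Proof. intros H0 _ HB. apply (zsum_bound g B H0 HB). Qed.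

Definition Cts (f : R -> R) := forall x, continuous f x.

Lemma c_plus (f g : R -> R) x : continuous f x -> continuous g x -> continuous (fun t => f t + g t) x.
Proof. intros; apply (continuous_plus f g); auto. Qed.
Lemma c_mult (f g : R -> R) x : continuous f x -> continuous g x -> continuous (fun t => f t * g t) x.
Proof. intros; apply (continuous_mult f g); auto. Qed.
Lemma c_opp (f : R -> R) x : continuous f x -> continuous (fun t => - f t) x.
Proof. intros; apply (continuous_opp f); auto. Qed.
Lemma c_minus (f g : R -> R) x : continuous f x -> continuous g x -> continuous (fun t => f t - g t) x.
Proof. intros; apply c_plus; auto; apply c_opp; auto. Qed.
Lemma c_const (c : R) x : continuous (fun _ : R => c) x.
Proof. apply continuous_const. Qed.
Lemma c_id x : continuous (fun t : R => t) x.
Proof. apply continuous_id. Qed.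
Lemma c_cos (f : R -> R) x : continuous f x -> continuous (fun t => cos (f t)) x.
Proof. apply continuous_cos_comp. Qed.
Lemma c_sin (f : R -> R) x : continuous f x -> continuous (fun t => sin (f t)) x.
Proof. apply continuous_sin_comp. Qed.
Lemma c_abs (f : R -> R) x : continuous f x -> continuous (fun t => Rabs (f t)) x.
Proof. apply continuous_Rabs_comp. Qed.
Lemma c_sqrt (f : R -> R) x : continuous f x -> continuous (fun t => sqrt (f t)) x.
Proof. apply continuous_sqrt_comp. Qed.
Lemma c_pow (f : R -> R) n x : continuous f x -> continuous (fun t => f t ^ n) x.
Proof. intro H. induction n. simpl. apply c_const. simpl. apply c_mult; auto. Qed.
Lemma c_divc (f : R -> R) c x : continuous f x -> continuous (fun t => f t / c) x.
Proof. intro. unfold Rdiv. apply c_mult; auto. apply c_const. Qed.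
Lemma c_app (f : R -> R) x : Cts f -> continuous f x.
Proof. auto. Qed.
Lemma c_comp (f : R -> R) (g : R -> R) x : Cts f -> continuous g x -> continuous (fun t => f (g t)) x.
Proof. intros Hf Hg. apply continuous_comp; auto. Qed.

Ltac cts_step := match goal with
 | H : Cts ?f |- continuous ?f _ => apply H
 | |- continuous (fun _ => ?c) _ => apply c_const
 | |- continuous (fun t => t) _ => apply c_id
 | |- continuous (fun t => @?a t + @?b t) _ => apply (c_plus a b)
 | |- continuous (fun t => @?a t - @?b t) _ => apply (c_minus a b)
 | |- continuous (fun t => @?a t * @?b t) _ => apply (c_mult a b)
 | |- continuous (fun t => - @?a t) _ => apply (c_opp a)
 | |- continuous (fun t => @?a t / ?c) _ => apply (c_divc a c)
 | |- continuous (fun t => cos (@?a t)) _ => apply (c_cos a)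
 | |- continuous (fun t => sin (@?a t)) _ => apply (c_sin a)
 | |- continuous (fun t => Rabs (@?a t)) _ => apply (c_abs a)
 | |- continuous (fun t => sqrt (@?a t)) _ => apply (c_sqrt a)
 | |- continuous (fun t => (@?a t) ^ ?n) _ => apply (c_pow a n)
 | H : Cts ?f |- continuous (fun t => ?f (@?g t)) _ => apply (c_comp f g _ H)
 end.
Ltac cts := repeat cts_step.

Lemma Cts_of_continuity f : continuity f -> Cts f.
Proof. intros H x. apply continuity_pt_filterlim. apply H. Qed.

Lemma continuity_of_Cts f : Cts f -> continuity f.
Proof. intros H x. apply continuity_pt_filterlim. apply H. Qed.

Lemma exRI f a b : Cts f -> ex_RInt f a b.
Proof. intros H. apply (@ex_RInt_continuous R_CompleteNormedModule). intros; apply H. Qed.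

Lemma Rint_RInt f : Cts f -> Rint f = RInt f 0 (2 * PI).
Proof.
  intro H. unfold Rint.
  assert (pr : Riemann_integrable f 0 (2 * PI)).
  { apply continuity_implies_RiemannInt. pose proof PI_RGT_0; lra.
    intros; apply continuity_pt_filterlim; apply H. }
  destruct (epsilon_spec (inhabits 0) (fun v => exists pr : Riemann_integrable f 0 (2 * PI), RiemannInt pr = v)
     (ex_intro _ (RiemannInt pr) (ex_intro _ pr eq_refl))) as [pr' Hpr'].
  rewrite <- Hpr'. symmetry. apply RInt_Reals.
Qed.

Lemma RIext (f g : R -> R) a b : (forall x, Rmin a b < x < Rmax a b -> f x = g x) -> RInt f a b = RInt g a b :> R.
Proof. intro H. apply (RInt_ext f g). exact H. Qed.

Lemma RI_plus f g a b : Cts f -> Cts g -> RInt (fun x => f x + g x) a b = RInt f a b + RInt g a b :> R.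
Proof. intros. apply (RInt_plus f g); apply exRI; auto. Qed.
Lemma RI_scal c f a b : Cts f -> RInt (fun x => c * f x) a b = c * RInt f a b :> R.
Proof. intros. apply (RInt_scal f a b c). apply exRI; auto. Qed.
Lemma RI_opp f a b : Cts f -> RInt (fun x => - f x) a b = - RInt f a b :> R.
Proof. intros. replace (- RInt f a b) with (-1 * RInt f a b) by ring. rewrite <- RI_scal by auto. apply RIext; intros. ring. Qed.
Lemma RI_minus f g a b : Cts f -> Cts g -> RInt (fun x => f x - g x) a b = RInt f a b - RInt g a b :> R.
Proof. intros. unfold Rminus. rewrite RI_plus, RI_opp; auto. intro x. cts. Qed.
Lemma RI_chasles f a b c : Cts f -> RInt f a b + RInt f b c = RInt f a c.
Proof. intros. apply (RInt_Chasles f); apply exRI; auto. Qed.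
Lemma RI_swap f a b : Cts f -> RInt f b a = - RInt f a b :> R.
Proof. intros. rewrite <- (opp_RInt_swap f a b); auto. apply exRI; auto. Qed.
Lemma RI_const c a b : RInt (fun _ => c) a b = (b - a) * c :> R.
Proof. rewrite RInt_const. reflexivity. Qed.
Lemma RI_le f g a b : a <= b -> Cts f -> Cts g -> (forall x, a < x < b -> f x <= g x) -> RInt f a b <= RInt g a b.
Proof. intros. apply RInt_le; auto; apply exRI; auto. Qed.
Lemma RI_abs f a b : a <= b -> Cts f -> Rabs (RInt f a b) <= RInt (fun t => Rabs (f t)) a b.
Proof. intros. apply abs_RInt_le; auto; apply exRI; auto. Qed.
Lemma RI_lin f u v a b : Cts f -> RInt (fun y => u * f (u * y + v)) a b = RInt f (u * a + v) (u * b + v) :> R.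
Proof. intros. rewrite <- (RInt_comp_lin f u v a b). reflexivity. apply exRI; auto. Qed.

Definition Per (f : R -> R) := forall x, f (x + 2 * PI) = f x.

Lemma RI_trans h a lo hi : Cts h -> RInt (fun s => h (s + a)) lo hi = RInt h (lo + a) (hi + a) :> R.
Proof. intro Hc. pose proof (RI_lin h 1 a lo hi Hc) as E. rewrite !Rmult_1_l in E. rewrite <- E.
  apply RIext; intros; rewrite !Rmult_1_l; reflexivity. Qed.

Lemma RI_neg h t lo hi : Cts h -> RInt (fun s => h (t - s)) lo hi = RInt h (t - hi) (t - lo) :> R.
Proof. intro Hc. pose proof (RI_lin h (-1) t lo hi Hc) as E.
  rewrite (RI_swap h (t - lo) (t - hi)); auto.
  replace (t - hi) with (-1 * hi + t) by ring. replace (t - lo) with (-1 * lo + t) by ring.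
  rewrite <- E. rewrite <- RI_opp. apply RIext; intros. replace (-1 * x + t) with (t - x) by ring. ring.
  intro; cts. Qed.

Lemma RI_shift h a : Cts h -> Per h -> RInt (fun s => h (s + a)) 0 (2 * PI) = RInt h 0 (2 * PI) :> R.
Proof.
  intros Hc Hp.
  rewrite RI_trans; auto. rewrite Rplus_0_l.
  assert (E2 : RInt h (2 * PI) (2 * PI + a) = RInt h 0 a).
  { replace (2 * PI) with (0 + 2 * PI) at 1 by ring. replace (2 * PI + a) with (a + 2 * PI) by ring.
    rewrite <- RI_trans; auto. apply RIext; intros. apply Hp. }
  rewrite <- (RI_chasles h a 0 (2 * PI + a)); auto.
  rewrite <- (RI_chasles h 0 (2 * PI) (2 * PI + a)); auto.
  rewrite E2. rewrite (RI_swap h a 0); auto. ring.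
Qed.

Lemma RI_refl h t : Cts h -> Per h -> RInt (fun s => h (t - s)) 0 (2 * PI) = RInt h 0 (2 * PI) :> R.
Proof.
  intros Hc Hp. rewrite RI_neg; auto.
  rewrite <- (RI_shift h (t - 2 * PI)); auto. rewrite RI_trans; auto. f_equal; ring.
Qed.

Lemma PI2_pos : 0 < 2 * PI.
Proof. pose proof PI_RGT_0; lra. Qed.

Lemma sin_2PIn n : sin (IZR n * (2 * PI)) = 0.
Proof. apply sin_eq_0_1. exists (2 * n)%Z. rewrite mult_IZR. ring. Qed.

Lemma cos_2PIn n : cos (IZR n * (2 * PI)) = 1.
Proof. replace (IZR n * (2 * PI)) with (2 * (IZR n * PI)) by ring. rewrite cos_2a_sin.
  rewrite sin_eq_0_1. ring. exists n; ring. Qed.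

Lemma cos_per n x : cos (IZR n * (x + 2 * PI)) = cos (IZR n * x).
Proof. replace (IZR n * (x + 2 * PI)) with (IZR n * x + IZR n * (2 * PI)) by ring.
  rewrite cos_plus, sin_2PIn, cos_2PIn. ring. Qed.
Lemma sin_per n x : sin (IZR n * (x + 2 * PI)) = sin (IZR n * x).
Proof. replace (IZR n * (x + 2 * PI)) with (IZR n * x + IZR n * (2 * PI)) by ring.
  rewrite sin_plus, sin_2PIn, cos_2PIn. ring. Qed.

Definition dZ (m : Z) : R := if Z.eq_dec m 0 then 1 else 0.

Lemma RI_cosn n : RInt (fun t => cos (IZR n * t)) 0 (2 * PI) = 2 * PI * dZ n :> R.
Proof.
  unfold dZ. destruct (Z.eq_dec n 0) as [->|Hn].
  - rewrite (RIext _ (fun _ => 1)). rewrite RI_const. ring. intros; simpl. rewrite Rmult_0_l, cos_0. auto.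
  - assert (Hn' : IZR n <> 0) by (apply not_0_IZR; auto).
    assert (H : is_RInt (fun t => cos (IZR n * t)) 0 (2 * PI)
                 (minus ((fun t => sin (IZR n * t) / IZR n) (2 * PI)) ((fun t => sin (IZR n * t) / IZR n) 0))).
    { apply (is_RInt_derive (fun t => sin (IZR n * t) / IZR n)).
      - intros x _. auto_derive; auto. field; auto.
      - intros x _. apply c_cos. apply c_mult; [apply c_const | apply c_id]. }
    apply (@is_RInt_unique R_CompleteNormedModule) in H. rewrite H. simpl. unfold minus, plus, opp; simpl.
    rewrite sin_2PIn, Rmult_0_r, sin_0. field. auto.
Qed.

Lemma RI_sinn n : RInt (fun t => sin (IZR n * t)) 0 (2 * PI) = 0 :> R.
Proof.
  destruct (Z.eq_dec n 0) as [->|Hn].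
  - rewrite (RIext _ (fun _ => 0)). rewrite RI_const. ring. intros; simpl. rewrite Rmult_0_l, sin_0. auto.
  - assert (Hn' : IZR n <> 0) by (apply not_0_IZR; auto).
    assert (H : is_RInt (fun t => sin (IZR n * t)) 0 (2 * PI)
                 (minus ((fun t => - cos (IZR n * t) / IZR n) (2 * PI)) ((fun t => - cos (IZR n * t) / IZR n) 0))).
    { apply (is_RInt_derive (fun t => - cos (IZR n * t) / IZR n)).
      - intros x _. auto_derive; auto. field; auto.
      - intros x _. apply c_sin. apply c_mult; [apply c_const | apply c_id]. }
    apply (@is_RInt_unique R_CompleteNormedModule) in H. rewrite H. simpl. unfold minus, plus, opp; simpl.
    rewrite cos_2PIn, Rmult_0_r, cos_0. field. auto.
Qed.

Lemma Cts_cosn n : Cts (fun t => cos (IZR n * t)).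
Proof. intro; cts. Qed.
Lemma Cts_sinn n : Cts (fun t => sin (IZR n * t)).
Proof. intro; cts. Qed.

Lemma Rint_ext f g : (forall x, f x = g x) -> Rint f = Rint g.
Proof. intro H. replace g with f. auto. apply functional_extensionality; auto. Qed.

Lemma fc_RInt f n : Cts f -> fc f n = / (2 * PI) * RInt (fun t => f t * cos (IZR n * t)) 0 (2 * PI).
Proof. intro H. unfold fc. rewrite Rint_RInt. auto. intro; cts. Qed.
Lemma fs_RInt f n : Cts f -> fs f n = / (2 * PI) * RInt (fun t => f t * sin (IZR n * t)) 0 (2 * PI).
Proof. intro H. unfold fs. rewrite Rint_RInt. auto. intro; cts. Qed.

Lemma fc_opp f n : Cts f -> fc f (- n) = fc f n.
Proof. intro H. rewrite !fc_RInt; auto. f_equal. apply RIext. intros. rewrite opp_IZR.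
  replace (- IZR n * x) with (- (IZR n * x)) by ring. rewrite cos_neg. auto. Qed.
Lemma fs_opp f n : Cts f -> fs f (- n) = - fs f n.
Proof. intro H. rewrite !fs_RInt; auto.
  replace (- (/ (2 * PI) * RInt (fun x => f x * sin (IZR n * x)) 0 (2 * PI)))
   with (/ (2 * PI) * - RInt (fun x => f x * sin (IZR n * x)) 0 (2 * PI)) by ring.
  rewrite <- RI_opp. 2: intro; cts.
  f_equal. apply RIext. intros. rewrite opp_IZR.
  replace (- IZR n * x) with (- (IZR n * x)) by ring. rewrite sin_neg. ring. Qed.

Lemma Cts_zero : Cts zero_fun.
Proof. intro; unfold zero_fun; cts. Qed.

Lemma fc_zero n : fc zero_fun n = 0.
Proof. rewrite fc_RInt by apply Cts_zero. rewrite (RIext _ (fun _ => 0)). rewrite RI_const. ring.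
  intros; unfold zero_fun; ring. Qed.
Lemma fs_zero n : fs zero_fun n = 0.
Proof. rewrite fs_RInt by apply Cts_zero. rewrite (RIext _ (fun _ => 0)). rewrite RI_const. ring.
  intros; unfold zero_fun; ring. Qed.

Lemma cabs2_zero f m : cabs2 f zero_fun m = fc f m ^ 2 + fs f m ^ 2.
Proof. unfold cabs2. rewrite fc_zero, fs_zero. ring. Qed.

Lemma conv_cos f n t : Cts f ->
  / (2 * PI) * RInt (fun s => f s * cos (IZR n * (t - s))) 0 (2 * PI)
  = cos (IZR n * t) * fc f n + sin (IZR n * t) * fs f n.
Proof.
  intro H. rewrite fc_RInt, fs_RInt; auto.
  rewrite (RIext _ (fun s => cos (IZR n * t) * (f s * cos (IZR n * s)) + sin (IZR n * t) * (f s * sin (IZR n * s)))).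
  rewrite RI_plus, !RI_scal. ring. 1-4: intro; cts.
  intros. replace (IZR n * (t - x)) with (IZR n * t - IZR n * x) by ring. rewrite cos_minus. ring.
Qed.

Lemma fc_sub_harm x P Q kz n : Cts x ->
  fc (fun t => x t - (P * cos (IZR kz * t) + Q * sin (IZR kz * t))) n
  = fc x n - P * ((dZ (kz + n) + dZ (kz - n)) / 2).
Proof.
  intro H. rewrite !fc_RInt; auto. 2: intro; cts.
  rewrite (RIext _ (fun t => x t * cos (IZR n * t) - (P * ((cos (IZR (kz + n) * t) + cos (IZR (kz - n) * t)) / 2)
                      + Q * ((sin (IZR (kz + n) * t) + sin (IZR (kz - n) * t)) / 2)))).
  - rewrite RI_minus, RI_plus, !RI_scal.
    rewrite (RIext (fun t => (cos (IZR (kz + n) * t) + cos (IZR (kz - n) * t)) / 2)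
                   (fun t => / 2 * (cos (IZR (kz + n) * t) + cos (IZR (kz - n) * t)))) by (intros; field).
    rewrite (RIext (fun t => (sin (IZR (kz + n) * t) + sin (IZR (kz - n) * t)) / 2)
                   (fun t => / 2 * (sin (IZR (kz + n) * t) + sin (IZR (kz - n) * t)))) by (intros; field).
    rewrite !RI_scal, !RI_plus, !RI_cosn, !RI_sinn. field. pose proof PI_RGT_0; lra.
    all: intro; cts.
  - intros; match goal with |- context [cos (IZR kz * ?z)] => set (y := z) end. rewrite plus_IZR, minus_IZR.
    replace ((IZR kz + IZR n) * y) with (IZR kz * y + IZR n * y) by ring.
    replace ((IZR kz - IZR n) * y) with (IZR kz * y - IZR n * y) by ring.
    rewrite cos_plus, cos_minus, sin_plus, sin_minus. field.
Qed.

Lemma fs_sub_harm x P Q kz n : Cts x ->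
  fs (fun t => x t - (P * cos (IZR kz * t) + Q * sin (IZR kz * t))) n
  = fs x n - Q * ((dZ (kz - n) - dZ (kz + n)) / 2).
Proof.
  intro H. rewrite !fs_RInt; auto. 2: intro; cts.
  rewrite (RIext _ (fun t => x t * sin (IZR n * t) - (P * / 2 * (sin (IZR (kz + n) * t) - sin (IZR (kz - n) * t))
                      + Q * / 2 * (cos (IZR (kz - n) * t) - cos (IZR (kz + n) * t))))).
  - rewrite RI_minus, RI_plus, !RI_scal, !RI_minus, !RI_cosn, !RI_sinn. field. pose proof PI_RGT_0; lra.
    all: intro; cts.
  - intros; match goal with |- context [cos (IZR kz * ?z)] => set (y := z) end. rewrite plus_IZR, minus_IZR.
    replace ((IZR kz + IZR n) * y) with (IZR kz * y + IZR n * y) by ring.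
    replace ((IZR kz - IZR n) * y) with (IZR kz * y - IZR n * y) by ring.
    rewrite cos_plus, cos_minus, sin_plus, sin_minus. field.
Qed.

Definition CS M x := sum_f_R0 (fun j => cos (INR j * x)) M.
Definition SS M x := sum_f_R0 (fun j => sin (INR j * x)) M.
Definition Kern M x := sum_f_R0 (fun j => sum_f_R0 (fun l => cos (IZR (Z.of_nat l - Z.of_nat j) * x)) M) M.

Lemma prod_sums (a b : nat -> R) M :
  sum_f_R0 a M * sum_f_R0 b M = sum_f_R0 (fun j => sum_f_R0 (fun l => b l * a j) M) M.
Proof.
  rewrite Rmult_comm. rewrite scal_sum. apply sum_eq. intros j _.
  rewrite scal_sum. reflexivity.
Qed.

Lemma Kern_eq M x : Kern M x = CS M x ^ 2 + SS M x ^ 2.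
Proof.
  unfold Kern, CS, SS. simpl. rewrite !Rmult_1_r. rewrite !prod_sums.
  rewrite <- sum_plus. apply sum_eq. intros j _.
  rewrite <- sum_plus. apply sum_eq. intros l _.
  rewrite minus_IZR, <- !INR_IZR_INZ.
  replace ((INR l - INR j) * x) with (INR l * x - INR j * x) by ring.
  rewrite cos_minus. ring.
Qed.

Lemma Kern_nonneg M x : 0 <= Kern M x.
Proof. rewrite Kern_eq. nra. Qed.

Lemma CS_SS_id M x :
  (cos x - 1) * CS M x - sin x * SS M x = cos (INR (S M) * x) - 1 /\
  sin x * CS M x + (cos x - 1) * SS M x = sin (INR (S M) * x).
Proof.
  induction M.
  - unfold CS, SS. simpl. rewrite Rmult_0_l, cos_0, sin_0, Rmult_1_l. split; ring.
  - destruct IHM as [H1 H2]. unfold CS, SS in *. rewrite !tech5.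
    rewrite (S_INR (S M)). replace ((INR (S M) + 1) * x) with (INR (S M) * x + x) by ring.
    rewrite cos_plus, sin_plus. split; nra.
Qed.

Lemma Kern_geo M x : (1 - cos x) * Kern M x <= 2.
Proof.
  rewrite Kern_eq. destruct (CS_SS_id M x) as [H1 H2].
  pose proof (sin2_cos2 x) as E. pose proof (sin2_cos2 (INR (S M) * x)) as E'.
  pose proof (COS_bound (INR (S M) * x)) as [Hc1 Hc2].
  unfold Rsqr in *.
  assert (((cos x - 1) * CS M x - sin x * SS M x) ^ 2 + (sin x * CS M x + (cos x - 1) * SS M x) ^ 2
     = 2 * (1 - cos x) * (CS M x ^ 2 + SS M x ^ 2)) by nra.
  rewrite H1, H2 in H. nra.
Qed.

Lemma Cts_sum (F : nat -> R -> R) M : (forall j, Cts (F j)) -> Cts (fun x => sum_f_R0 (fun j => F j x) M).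
Proof. intros H. induction M; intro x; simpl.
  - apply H.
  - apply (c_plus (fun x => sum_f_R0 (fun j => F j x) M) (F (S M))); auto. apply H. Qed.

Lemma RI_sum (F : nat -> R -> R) M a b : (forall j, Cts (F j)) ->
  RInt (fun x => sum_f_R0 (fun j => F j x) M) a b = sum_f_R0 (fun j => RInt (F j) a b) M :> R.
Proof. intros H. induction M; simpl.
  - apply RIext; auto.
  - rewrite (RI_plus (fun x => sum_f_R0 (fun j => F j x) M) (F (S M))); auto. rewrite IHM; auto.
    apply Cts_sum; auto. Qed.

Lemma Cts_Kern M : Cts (Kern M).
Proof. unfold Kern. apply (Cts_sum (fun j x => sum_f_R0 (fun l => cos (IZR (Z.of_nat l - Z.of_nat j) * x)) M)).
  intro j. apply (Cts_sum (fun l x => cos (IZR (Z.of_nat l - Z.of_nat j) * x))). intros l y. cts. Qed.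

Lemma Per_Kern M : Per (Kern M).
Proof. intro x. unfold Kern. apply sum_eq; intros; apply sum_eq; intros. apply cos_per. Qed.

Lemma sum_dZ (j L : nat) : sum_f_R0 (fun l => dZ (Z.of_nat l - Z.of_nat j)) L = if le_dec j L then 1 else 0.
Proof. induction L; cbn [sum_f_R0].
  - unfold dZ. repeat destruct (Z.eq_dec _ _); repeat destruct (le_dec _ _); auto; lia.
  - rewrite IHL. unfold dZ. repeat destruct (Z.eq_dec _ _); repeat destruct (le_dec _ _); try lra; lia. Qed.

Lemma RI_Kern M : RInt (Kern M) 0 (2 * PI) = 2 * PI * (INR M + 1) :> R.
Proof.
  unfold Kern. rewrite (RI_sum (fun j x => sum_f_R0 (fun l => cos (IZR (Z.of_nat l - Z.of_nat j) * x)) M)).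
  2: { intro j. apply (Cts_sum (fun l x => cos (IZR (Z.of_nat l - Z.of_nat j) * x))). intros l y. cts. }
  rewrite (sum_eq _ (fun _ => 2 * PI)). rewrite sum_cte, S_INR. ring.
  intros j Hj. rewrite (RI_sum (fun l x => cos (IZR (Z.of_nat l - Z.of_nat j) * x))).
  2: { intros l y. cts. }
  rewrite (sum_eq _ (fun l => dZ (Z.of_nat l - Z.of_nat j) * (2 * PI))).
  2: { intros; rewrite RI_cosn; ring. }
  rewrite <- scal_sum, sum_dZ. destruct (le_dec j M); [ring|lia].
Qed.

Lemma conv_Kern f M t : Cts f ->
  / (2 * PI) * RInt (fun s => f s * Kern M (t - s)) 0 (2 * PI)
  = sum_f_R0 (fun j => sum_f_R0 (fun l =>
       cos (IZR (Z.of_nat l - Z.of_nat j) * t) * fc f (Z.of_nat l - Z.of_nat j)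
     + sin (IZR (Z.of_nat l - Z.of_nat j) * t) * fs f (Z.of_nat l - Z.of_nat j)) M) M.
Proof.
  intro Hf.
  rewrite (RIext _ (fun s => sum_f_R0 (fun j => sum_f_R0 (fun l =>
        f s * cos (IZR (Z.of_nat l - Z.of_nat j) * (t - s))) M) M)).
  2: { intros s _. unfold Kern. rewrite scal_sum. apply sum_eq. intros j _.
       rewrite Rmult_comm, scal_sum. apply sum_eq. intros; ring. }
  rewrite (RI_sum (fun j s => sum_f_R0 (fun l => f s * cos (IZR (Z.of_nat l - Z.of_nat j) * (t - s))) M)).
  2: { intro j. apply (Cts_sum (fun l s => f s * cos (IZR (Z.of_nat l - Z.of_nat j) * (t - s)))).
       intros l y. cts. }
  rewrite scal_sum. apply sum_eq. intros j _.
  rewrite (RI_sum (fun l s => f s * cos (IZR (Z.of_nat l - Z.of_nat j) * (t - s)))).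
  2: { intros l y. cts. }
  rewrite Rmult_comm, scal_sum. apply sum_eq. intros l _.
  rewrite Rmult_comm. apply conv_cos; auto.
Qed.

Definition rr f n := sqrt (fc f n ^ 2 + fs f n ^ 2).

Lemma rr_nonneg f n : 0 <= rr f n.
Proof. apply sqrt_pos. Qed.

Lemma harm_bound a p q : Rabs (cos a * p + sin a * q) <= sqrt (p ^ 2 + q ^ 2).
Proof.
  rewrite <- sqrt_Rsqr_abs. apply sqrt_le_1_alt.
  pose proof (sin2_cos2 a). unfold Rsqr in *.
  assert (0 <= (sin a * p - cos a * q) ^ 2) by apply pow2_ge_0.
  assert (E : (cos a * p + sin a * q) * (cos a * p + sin a * q) + (sin a * p - cos a * q) ^ 2
     = (sin a * sin a + cos a * cos a) * (p ^ 2 + q ^ 2)) by ring.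
  rewrite H in E. lra.
Qed.

Section Win.
Variable r : Z -> R.
Hypothesis r0 : forall m, 0 <= r m.
Definition U a L := sum_f_R0 (fun l => r (a + Z.of_nat l)%Z) L.

Lemma U_S a L : U a L <= U a (S L).
Proof. unfold U. rewrite tech5. specialize (r0 (a + Z.of_nat (S L))%Z). lra. Qed.

Lemma U_shift a L : U a L <= U (a - 1)%Z (S L).
Proof. unfold U. rewrite (decomp_sum _ (S L)) by lia. simpl Init.Nat.pred.
  rewrite (sum_eq (fun i => r (a - 1 + Z.of_nat (S i))%Z) (fun l => r (a + Z.of_nat l)%Z)).
  specialize (r0 (a - 1 + Z.of_nat 0)%Z). lra.
  intros; f_equal; lia. Qed.

Lemma U_gen a L d : U a L <= U (a - Z.of_nat d)%Z (L + d).
Proof. induction d.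
  - replace (a - Z.of_nat 0)%Z with a by lia. rewrite Nat.add_0_r. lra.
  - eapply Rle_trans. apply IHd. replace (L + S d)%nat with (S (L + d)) by lia.
    replace (a - Z.of_nat (S d))%Z with (a - Z.of_nat d - 1)%Z by lia. apply U_shift. Qed.

Lemma U_mono a L L' : (L <= L')%nat -> U a L <= U a L'.
Proof. induction 1. lra. eapply Rle_trans. apply IHle. apply U_S. Qed.

Lemma zpart_U M : zpart r M = U (- Z.of_nat M)%Z (2 * M).
Proof. unfold zpart, U. apply sum_eq. intros; f_equal; lia. Qed.

Lemma inner_le (j M : nat) : (j <= M)%nat ->
  sum_f_R0 (fun l => r (Z.of_nat l - Z.of_nat j)%Z) M <= zpart r M.
Proof.
  intro Hj. rewrite zpart_U.
  replace (sum_f_R0 (fun l => r (Z.of_nat l - Z.of_nat j)%Z) M) with (U (- Z.of_nat j)%Z M).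
  2: { unfold U. apply sum_eq. intros; f_equal; lia. }
  eapply Rle_trans. apply (U_gen _ _ (M - j)).
  replace (- Z.of_nat j - Z.of_nat (M - j))%Z with (- Z.of_nat M)%Z by lia.
  apply U_mono. lia.
Qed.
End Win.

Lemma conv_Kern_bound f M t B : Cts f -> (forall M, zpart (rr f) M <= B) ->
  Rabs (/ (2 * PI) * RInt (fun s => f s * Kern M (t - s)) 0 (2 * PI)) <= (INR M + 1) * B.
Proof.
  intros Hf HB. rewrite conv_Kern; auto.
  eapply Rle_trans. apply sum_f_R0_triangle.
  eapply Rle_trans with (sum_f_R0 (fun _ => B) M).
  - apply sum_Rle. intros j Hj.
    eapply Rle_trans. apply sum_f_R0_triangle.
    apply Rle_trans with (sum_f_R0 (fun l => rr f (Z.of_nat l - Z.of_nat j)%Z) M).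
    + apply sum_Rle. intros. apply harm_bound.
    + eapply Rle_trans. apply (inner_le (rr f)); auto. apply rr_nonneg. apply HB.
  - rewrite sum_cte, S_INR. lra.
Qed.

Lemma cont_eps f t eps : Cts f -> eps > 0 -> exists d, d > 0 /\ forall y, Rabs (y - t) < d -> Rabs (f y - f t) < eps.
Proof.
  intros Hf He.
  assert (H : continuity_pt f t) by (apply continuity_pt_filterlim; apply Hf).
  unfold continuity_pt, continue_in, limit1_in, limit_in in H.
  destruct (H eps He) as [d [Hd H']]. exists d. split; auto. intros y Hy.
  destruct (Req_dec y t) as [->|Hne].
  - rewrite Rminus_diag, Rabs_R0. lra.
  - apply (H' y). split. split. exact I. auto. simpl. unfold R_dist. auto.
Qed.

Lemma cos_le_d d x : 0 < d <= PI -> d <= x <= 2 * PI - d -> cos x <= cos d.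
Proof.
  intros Hd Hx. destruct (Rle_lt_dec x PI).
  - destruct (Req_dec x d) as [->|]. lra. left. apply cos_decreasing_1; lra.
  - replace (cos x) with (cos (2 * PI - x)).
    + destruct (Req_dec (2 * PI - x) d) as [E|]. rewrite E; lra. left. apply cos_decreasing_1; lra.
    + rewrite cos_minus, cos_2PI, sin_2PI. ring.
Qed.

Lemma RI_nonneg f a b : a <= b -> Cts f -> (forall x, a < x < b -> 0 <= f x) -> 0 <= RInt f a b.
Proof. intros Hab Hf H. replace 0 with (RInt (fun _ => 0) a b :> R).
  - apply RI_le; auto. intro; cts.
  - rewrite RI_const. apply Rmult_0_r. Qed.

Lemma fejer f t eps : Cts f -> Per f -> eps > 0 ->
  exists M, Rabs (/ (2 * PI) * RInt (fun s => f s * Kern M (t - s)) 0 (2 * PI) / (INR M + 1) - f t) <= eps.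
Proof.
  intros Hf Hp He.
  pose proof PI_RGT_0 as Hpi.
  destruct (cont_eps f t (eps / 2) Hf) as [d [Hd Hcd]]. lra.
  set (d0 := Rmin d PI).
  assert (Hd0 : 0 < d0 <= PI) by (unfold d0; split; [apply Rmin_glb_lt; lra | apply Rmin_r]).
  assert (Hd0d : d0 <= d) by apply Rmin_l.
  set (psi := fun x => Rabs (f (t - x) - f t)).
  assert (Cpsi : Cts psi) by (intro; unfold psi; cts).
  destruct (continuity_ab_maj psi d0 (2 * PI - d0)) as [xm [Hxm1 Hxm2]]. lra.
  { intros; apply continuity_pt_filterlim; apply Cpsi. }
  set (K1 := psi xm).
  assert (HK1 : 0 <= K1) by (unfold K1, psi; apply Rabs_pos).
  assert (Hcd0 : cos d0 < 1) by (rewrite <- cos_0; apply cos_decreasing_1; lra).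
  set (C0 := 2 * PI * (K1 * (2 / (1 - cos d0)))).
  assert (HC0 : 0 <= C0). { unfold C0. apply Rmult_le_pos. lra. apply Rmult_le_pos; auto.
    apply Rlt_le, Rdiv_lt_0_compat; lra. }
  destruct (INR_archimed (eps * PI) C0) as [M HM]. nra.
  exists M.
  assert (HM1 : 0 < INR M + 1) by (pose proof (pos_INR M); lra).
  set (Kp := Kern M).
  assert (CK : Cts Kp) by apply Cts_Kern.
  assert (E1 : RInt (fun s => f s * Kp (t - s)) 0 (2 * PI) = RInt (fun x => f (t - x) * Kp x) 0 (2 * PI)).
  { rewrite <- (RI_refl (fun s => f s * Kp (t - s)) t).
    - apply RIext. intros. replace (t - (t - x)) with x by ring. auto.
    - intro; cts.
    - intro s. unfold Kp. rewrite Hp. f_equal.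
      pose proof (Per_Kern M (t - (s + 2 * PI))) as P. replace (t - (s + 2 * PI) + 2 * PI) with (t - s) in P by ring.
      auto. }
  assert (E2 : f t = / (2 * PI) * RInt (fun x => f t * Kp x) 0 (2 * PI) / (INR M + 1)).
  { rewrite RI_scal; auto. unfold Kp; rewrite RI_Kern. field. lra. }
  rewrite E1. rewrite E2.
  replace (/ (2 * PI) * RInt (fun x => f (t - x) * Kp x) 0 (2 * PI) / (INR M + 1) -
           / (2 * PI) * RInt (fun x => f t * Kp x) 0 (2 * PI) / (INR M + 1))
    with (/ (2 * PI * (INR M + 1)) * RInt (fun x => (f (t - x) - f t) * Kp x) 0 (2 * PI)).
  2: { rewrite (RIext _ (fun x => f (t - x) * Kp x - f t * Kp x)) by (intros; ring).
       rewrite RI_minus. field. split; lra. intro; cts. intro; cts. }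
  rewrite Rabs_mult. rewrite Rabs_right. 2: { apply Rle_ge, Rlt_le, Rinv_0_lt_compat. nra. }
  assert (Hint : Rabs (RInt (fun x => (f (t - x) - f t) * Kp x) 0 (2 * PI)) <=
                 eps / 2 * (2 * PI * (INR M + 1)) + C0).
  { eapply Rle_trans. apply RI_abs. lra. intro; cts.
    rewrite (RIext _ (fun x => psi x * Kp x)).
    2: { intros. unfold psi. rewrite Rabs_mult. rewrite (Rabs_right (Kp x)). auto. apply Rle_ge, Kern_nonneg. }
    assert (Cg : Cts (fun x => psi x * Kp x)) by (intro; cts).
    rewrite <- (RI_chasles _ 0 d0 (2 * PI)); auto.
    rewrite <- (RI_chasles _ d0 (2 * PI - d0) (2 * PI)); auto.
    assert (B1 : RInt (fun x => psi x * Kp x) 0 d0 <= RInt (fun x => eps / 2 * Kp x) 0 d0).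
    { apply RI_le; try lra; auto. intro; cts. intros x Hx. apply Rmult_le_compat_r. apply Kern_nonneg.
      unfold psi. left. apply Hcd. replace (t - x - t) with (- x) by ring. rewrite Rabs_Ropp, Rabs_right; lra. }
    assert (B3 : RInt (fun x => psi x * Kp x) (2 * PI - d0) (2 * PI) <= RInt (fun x => eps / 2 * Kp x) (2 * PI - d0) (2 * PI)).
    { apply RI_le; try lra; auto. intro; cts. intros x Hx. apply Rmult_le_compat_r. apply Kern_nonneg.
      unfold psi. rewrite <- (Hp (t - x)). left. apply Hcd.
      replace (t - x + 2 * PI - t) with (2 * PI - x) by ring. rewrite Rabs_right; lra. }
    assert (B2 : RInt (fun x => psi x * Kp x) d0 (2 * PI - d0) <= RInt (fun _ => K1 * (2 / (1 - cos d0))) d0 (2 * PI - d0)).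
    { apply RI_le; try lra; auto. intro; cts. intros x Hx. apply Rmult_le_compat.
      unfold psi; apply Rabs_pos. apply Kern_nonneg. apply Hxm1; lra.
      pose proof (cos_le_d d0 x Hd0 ltac:(lra)) as Hc.
      pose proof (Kern_geo M x) as G. fold Kp in G.
      apply Rmult_le_reg_l with (1 - cos d0). lra.
      replace ((1 - cos d0) * (2 / (1 - cos d0))) with 2 by (field; lra).
      eapply Rle_trans; [|apply G]. apply Rmult_le_compat_r. apply Kern_nonneg. lra. }
    rewrite RI_const in B2. rewrite !RI_scal in B1, B3; auto.
    assert (Hmid : 0 <= RInt Kp d0 (2 * PI - d0)) by (apply RI_nonneg; auto; try lra; intros; apply Kern_nonneg).
    assert (Htot : RInt Kp 0 d0 + RInt Kp d0 (2 * PI - d0) + RInt Kp (2 * PI - d0) (2 * PI) = 2 * PI * (INR M + 1)).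
    { rewrite RI_chasles, RI_chasles; auto. apply RI_Kern. }
    assert (HB2 : (2 * PI - d0 - d0) * (K1 * (2 / (1 - cos d0))) <= C0).
    { unfold C0. apply Rmult_le_compat_r. apply Rmult_le_pos; auto. apply Rlt_le, Rdiv_lt_0_compat; lra. lra. }
    nra. }
  apply Rmult_le_reg_l with (2 * PI * (INR M + 1)). nra.
  rewrite <- Rmult_assoc, Rinv_r, Rmult_1_l. 2: nra.
  eapply Rle_trans. apply Hint.
  assert (INR M * (eps * PI) <= (INR M + 1) * (eps * PI)) by nra. nra.
Qed.

Lemma le_eps x B : (forall eps, eps > 0 -> x <= B + eps) -> x <= B.
Proof. intro H. destruct (Rle_lt_dec x B); auto. specialize (H ((x - B) / 2)). lra. Qed.

Lemma core f B t : Cts f -> Per f -> (forall M, zpart (rr f) M <= B) -> Rabs (f t) <= B.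
Proof.
  intros Hf Hp HB. apply le_eps. intros eps He.
  destruct (fejer f t eps Hf Hp He) as [M HM].
  pose proof (conv_Kern_bound f M t B Hf HB) as HA.
  set (A := / (2 * PI) * RInt (fun s => f s * Kern M (t - s)) 0 (2 * PI)) in *.
  assert (HM1 : 0 < INR M + 1) by (pose proof (pos_INR M); lra).
  assert (Rabs (A / (INR M + 1)) <= B).
  { unfold Rdiv. rewrite Rabs_mult, (Rabs_right (/ _)). 2: apply Rle_ge, Rlt_le, Rinv_0_lt_compat; lra.
    apply Rmult_le_reg_r with (INR M + 1). lra. rewrite Rmult_assoc, Rinv_l; lra. }
  pose proof (Rabs_triang_inv (f t) (A / (INR M + 1))) as T.
  replace (f t - A / (INR M + 1)) with (- (A / (INR M + 1) - f t)) in T by ring.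
  rewrite Rabs_Ropp in T. lra.
Qed.

Lemma cabs2_nonneg x y m : 0 <= cabs2 x y m.
Proof. unfold cabs2. pose proof (pow2_ge_0 (fc x m + fs y m)). pose proof (pow2_ge_0 (fc y m - fs x m)). lra. Qed.

Lemma rr_sq f n : rr f n ^ 2 = fc f n ^ 2 + fs f n ^ 2.
Proof. unfold rr. rewrite <- Rsqr_pow2, Rsqr_sqrt. auto. pose proof (pow2_ge_0 (fc f n)); pose proof (pow2_ge_0 (fs f n)); lra. Qed.

Lemma amgm E s : 0 <= E -> 0 < s -> sqrt E <= / (2 * s) + s * E / 2.
Proof. intros HE Hs. pose proof (sqrt_pos E). pose proof (sqrt_sqrt E HE).
  assert (0 <= (s * sqrt E - 1) ^ 2) by apply pow2_ge_0.
  apply Rmult_le_reg_l with (2 * s). lra. field_simplify; try lra. nra. Qed.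

Lemma rr_le_sqrt f n E : rr f n ^ 2 <= E -> rr f n <= sqrt E.
Proof. intro H. rewrite rr_sq in H. unfold rr. apply sqrt_le_1_alt. auto. Qed.

Section Zeta.
Variables x y : R -> R.
Variable kz : Z.
Hypothesis Hk : kz <> 0%Z.
Hypothesis Cx : Cts x.
Hypothesis Cy : Cts y.

Definition PP := fc x (- kz) + fs y (- kz).
Definition QQ := fc y (- kz) - fs x (- kz).
Definition gx t := x t - (PP * cos (IZR kz * t) + QQ * sin (IZR kz * t)).
Definition gy t := y t - (QQ * cos (IZR kz * t) + (- PP) * sin (IZR kz * t)).
Definition Dm m := if Z.eq_dec m (- kz) then 0 else cabs2 x y m.

Lemma dZ_cases n :
  (n = kz /\ dZ (kz + n) = 0 /\ dZ (kz - n) = 1) \/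
  (n = (- kz)%Z /\ dZ (kz + n) = 1 /\ dZ (kz - n) = 0) \/
  (n <> kz /\ n <> (- kz)%Z /\ dZ (kz + n) = 0 /\ dZ (kz - n) = 0).
Proof. unfold dZ. destruct (Z.eq_dec n kz) as [->|h1]; [left|right].
  - repeat destruct (Z.eq_dec _ _); repeat split; auto; lia.
  - destruct (Z.eq_dec n (- kz)) as [->|h2]; [left|right];
    repeat destruct (Z.eq_dec _ _); repeat split; auto; lia. Qed.

Ltac opps := rewrite ?Z.opp_involutive; repeat (rewrite fc_opp by auto); repeat (rewrite fs_opp by auto).

Ltac hints := match goal with |- context [fc x ?m] =>
   pose proof (pow2_ge_0 (fc x m + fs y m)); pose proof (pow2_ge_0 (fc y m - fs x m));
   pose proof (pow2_ge_0 (fc y m)); pose proof (pow2_ge_0 (fs y m));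
   pose proof (pow2_ge_0 (fc x m)); pose proof (pow2_ge_0 (fs x m)) end.

Lemma rr_gx n : rr gx n ^ 2 <= (Dm n + Dm (- n)) / 2.
Proof.
  rewrite rr_sq. unfold gx. rewrite fc_sub_harm, fs_sub_harm; auto.
  unfold Dm, cabs2, PP, QQ.
  destruct (dZ_cases n) as [(-> & H1 & H2)|[(-> & H1 & H2)|(h1 & h2 & H1 & H2)]]; rewrite H1, H2; opps;
  repeat destruct (Z.eq_dec _ _); try lia; hints; nra.
Qed.

Lemma rr_gy n : rr gy n ^ 2 <= (Dm n + Dm (- n)) / 2.
Proof.
  rewrite rr_sq. unfold gy. rewrite fc_sub_harm, fs_sub_harm; auto.
  unfold Dm, cabs2, PP, QQ.
  destruct (dZ_cases n) as [(-> & H1 & H2)|[(-> & H1 & H2)|(h1 & h2 & H1 & H2)]]; rewrite H1, H2; opps;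
  repeat destruct (Z.eq_dec _ _); try lia; hints; nra.
Qed.

Definition hk m := (IZR m + IZR kz) ^ 2 * cabs2 x y m.

Lemma hk_nonneg m : 0 <= hk m.
Proof. unfold hk. apply Rmult_le_pos. apply pow2_ge_0. apply cabs2_nonneg. Qed.

Lemma sig_Dm n : (1 + IZR n ^ 2) * Dm n <= (3 + 2 * IZR kz ^ 2) * hk n.
Proof.
  unfold Dm, hk. destruct (Z.eq_dec n (- kz)).
  - rewrite Rmult_0_r. apply Rmult_le_pos. pose proof (pow2_ge_0 (IZR kz)); lra.
    apply Rmult_le_pos. apply pow2_ge_0. apply cabs2_nonneg.
  - assert (Hu : 1 <= (IZR n + IZR kz) ^ 2).
    { rewrite <- plus_IZR. destruct (Z_le_gt_dec 1 (n + kz)) as [h|h].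
      + apply IZR_le in h. nra.
      + assert (h' : (n + kz <= -1)%Z) by lia. apply IZR_le in h'. nra. }
    pose proof (cabs2_nonneg x y n).
    assert (1 + IZR n ^ 2 <= (3 + 2 * IZR kz ^ 2) * (IZR n + IZR kz) ^ 2).
    { pose proof (pow2_ge_0 (IZR n + 2 * IZR kz)). pose proof (pow2_ge_0 (IZR kz)). nra. }
    rewrite <- Rmult_assoc. apply Rmult_le_compat_r; auto.
Qed.

Lemma rr_g_pt g : (forall n, rr g n ^ 2 <= (Dm n + Dm (- n)) / 2) -> forall n,
  rr g n <= / 2 * / (1 + IZR n ^ 2) + (3 + 2 * IZR kz ^ 2) / 4 * (hk n + hk (- n)).
Proof.
  intros Hg n.
  assert (HD : forall m, 0 <= Dm m) by (intro m; unfold Dm; destruct (Z.eq_dec _ _); [lra| apply cabs2_nonneg]).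
  assert (Hs : 0 < 1 + IZR n ^ 2) by (pose proof (pow2_ge_0 (IZR n)); lra).
  eapply Rle_trans. apply rr_le_sqrt. apply Hg.
  eapply Rle_trans. apply (amgm _ (1 + IZR n ^ 2)). pose proof (HD n); pose proof (HD (- n)%Z); lra. auto.
  pose proof (sig_Dm n) as S1. pose proof (sig_Dm (- n)) as S2. rewrite opp_IZR in S2.
  replace ((- IZR n) ^ 2) with (IZR n ^ 2) in S2 by ring.
  rewrite Rinv_mult. lra.
Qed.

Lemma zpart_rr_g g H : (forall n, rr g n ^ 2 <= (Dm n + Dm (- n)) / 2) ->
  (forall M, zpart hk M <= H) -> forall M, zpart (rr g) M <= 5 / 2 + (3 + 2 * IZR kz ^ 2) / 2 * H.
Proof.
  intros Hg HH M.
  eapply Rle_trans. apply zpart_le. apply (rr_g_pt g Hg).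
  rewrite zpart_plus, zpart_scal, zpart_scal, zpart_plus.
  rewrite (zpart_neg hk M).
  pose proof (zpart_invsq5 M). pose proof (HH M).
  assert (0 <= 3 + 2 * IZR kz ^ 2) by (pose proof (pow2_ge_0 (IZR kz)); lra).
  nra.
Qed.

Lemma Per_harm (z : R -> R) P Q : Per z -> Per (fun t => z t - (P * cos (IZR kz * t) + Q * sin (IZR kz * t))).
Proof. intros Hp t. rewrite Hp, cos_per, sin_per. auto. Qed.

Theorem zeta_approx H : Per x -> Per y -> (forall M, zpart hk M <= H) -> forall t,
  Rabs (gx t) <= 5 / 2 + (3 + 2 * IZR kz ^ 2) / 2 * H /\ Rabs (gy t) <= 5 / 2 + (3 + 2 * IZR kz ^ 2) / 2 * H.
Proof.
  intros Px Py HH t. split.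
  - apply core. intro; unfold gx; cts. unfold gx; apply (Per_harm x); auto.
    apply zpart_rr_g; auto. apply rr_gx.
  - apply core. intro; unfold gy; cts. unfold gy; apply (Per_harm y); auto.
    apply zpart_rr_g; auto. apply rr_gy.
Qed.

End Zeta.

Lemma rsum_nonneg n f : (forall i, (i < n)%nat -> 0 <= f i) -> 0 <= rsum n f.
Proof. induction n; cbn [rsum]; intros H. lra. pose proof (H n ltac:(lia)). pose proof (IHn ltac:(intros; apply H; lia)). lra. Qed.

Lemma rsum_ge_term n f i : (forall i, (i < n)%nat -> 0 <= f i) -> (i < n)%nat -> f i <= rsum n f.
Proof. induction n; cbn [rsum]; intros H Hi. lia.
  destruct (Nat.eq_dec i n) as [->|].
  - pose proof (rsum_nonneg n f ltac:(intros; apply H; lia)). lra.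
  - pose proof (H n ltac:(lia)). pose proof (IHn ltac:(intros; apply H; lia) ltac:(lia)). lra. Qed.

Lemma rsum_le_const n f c : (forall i, (i < n)%nat -> f i <= c) -> rsum n f <= INR n * c.
Proof. induction n; cbn [rsum]; intros H. simpl; lra. rewrite S_INR. pose proof (H n ltac:(lia)).
  pose proof (IHn ltac:(intros; apply H; lia)). lra. Qed.

Lemma Cts_rsum n (F : nat -> R -> R) : (forall i, (i < n)%nat -> Cts (F i)) -> Cts (fun t => rsum n (fun i => F i t)).
Proof. induction n; cbn [rsum]; intros H x. apply c_const.
  apply (c_plus (fun t => rsum n (fun i => F i t)) (F n)). apply IHn; intros; apply H; lia. apply H; lia. Qed.

Lemma Cts_ext f g : (forall x, f x = g x) -> Cts f -> Cts g.
Proof. intros E H. replace g with f; auto. apply functional_extensionality; auto. Qed.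

Lemma summable_le g u c : 0 <= c -> (forall m, 0 <= g m) -> (forall m, 0 <= u m) -> zsummable u ->
  (forall m, g m <= c * u m) -> zsummable g /\ zsum g <= c * zsum u.
Proof.
  intros Hc Hg Hu Su Hle.
  destruct (zsum_summable u Hu Su) as [Hp _].
  assert (HB : forall M, zpart g M <= c * zsum u).
  { intro M. eapply Rle_trans. apply zpart_le. apply Hle. rewrite zpart_scal.
    apply Rmult_le_compat_l; auto. }
  destruct (zsum_bound g _ Hg HB) as (? & ? & _). auto.
Qed.

Lemma summable_le2 g u v c : 0 <= c -> (forall m, 0 <= g m) -> (forall m, 0 <= u m) -> (forall m, 0 <= v m) ->
  zsummable u -> zsummable v ->
  (forall m, g m <= c * (u m + v m)) -> zsummable g /\ zsum g <= c * (zsum u + zsum v).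
Proof.
  intros Hc Hg Hu Hv Su Sv Hle.
  destruct (zsum_summable u Hu Su) as [Hp _].
  destruct (zsum_summable v Hv Sv) as [Hq _].
  assert (HB : forall M, zpart g M <= c * (zsum u + zsum v)).
  { intro M. eapply Rle_trans. apply zpart_le. apply Hle. rewrite zpart_scal, zpart_plus.
    apply Rmult_le_compat_l; auto. specialize (Hp M); specialize (Hq M); lra. }
  destruct (zsum_bound g _ Hg HB) as (? & ? & _). auto.
Qed.

Lemma H1w_nonneg x y m : 0 <= H1_weight x y m.
Proof. unfold H1_weight. apply Rmult_le_pos. pose proof (pow2_ge_0 (IZR m)); lra. apply cabs2_nonneg. Qed.

Lemma cabs2_le x y m : cabs2 x y m <= 2 * (cabs2 x zero_fun m + cabs2 y zero_fun m).
Proof. rewrite !cabs2_zero. unfold cabs2.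
  pose proof (pow2_ge_0 (fc x m - fs y m)). pose proof (pow2_ge_0 (fc y m + fs x m)). nra. Qed.

Lemma cnorm_nonneg a b : 0 <= cnorm a b.
Proof. apply sqrt_pos. Qed.

Lemma cnorm_sq a b : cnorm a b ^ 2 = a ^ 2 + b ^ 2.
Proof. unfold cnorm. rewrite <- Rsqr_pow2, Rsqr_sqrt. auto. nra. Qed.

Lemma cnorm_le_abs a b : cnorm a b <= Rabs a + Rabs b.
Proof. unfold cnorm. rewrite <- (sqrt_Rsqr (Rabs a + Rabs b)). apply sqrt_le_1_alt.
  unfold Rsqr. pose proof (Rabs_pos a). pose proof (Rabs_pos b).
  rewrite <- (pow2_abs a), <- (pow2_abs b). nra.
  pose proof (Rabs_pos a). pose proof (Rabs_pos b). lra. Qed.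

Lemma abs_le_cnorm1 a b : Rabs a <= cnorm a b.
Proof. unfold cnorm. rewrite <- sqrt_Rsqr_abs. apply sqrt_le_1_alt. unfold Rsqr. nra. Qed.
Lemma abs_le_cnorm2 a b : Rabs b <= cnorm a b.
Proof. unfold cnorm. rewrite <- sqrt_Rsqr_abs. apply sqrt_le_1_alt. unfold Rsqr. nra. Qed.

Lemma cnorm_triang a b c d : cnorm (a + c) (b + d) <= cnorm a b + cnorm c d.
Proof.
  pose proof (cnorm_nonneg a b). pose proof (cnorm_nonneg c d). pose proof (cnorm_nonneg (a+c) (b+d)).
  apply Rsqr_incr_0_var. 2: lra. unfold Rsqr.
  pose proof (cnorm_sq a b). pose proof (cnorm_sq c d). pose proof (cnorm_sq (a + c) (b + d)).
  assert (a * c + b * d <= cnorm a b * cnorm c d).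
  { assert ((a * c + b * d) ^ 2 <= (cnorm a b * cnorm c d) ^ 2).
    { rewrite Rpow_mult_distr, H2, H3. pose proof (pow2_ge_0 (a * d - b * c)). nra. }
    destruct (Rle_lt_dec (a * c + b * d) 0). nra.
    apply Rsqr_incr_0_var. unfold Rsqr. nra. nra. }
  nra.
Qed.

Lemma cnorm_scal c a b : cnorm (c * a) (c * b) = Rabs c * cnorm a b.
Proof. unfold cnorm. rewrite <- sqrt_Rsqr_abs at 1. rewrite <- sqrt_mult. f_equal. unfold Rsqr; ring.
  apply Rle_0_sqr. nra. Qed.

Lemma cnorm_opp a b : cnorm (- a) (- b) = cnorm a b.
Proof. unfold cnorm. f_equal. ring. Qed.

Lemma cnorm_rev a b c d : Rabs (cnorm a b - cnorm c d) <= cnorm (a - c) (b - d).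
Proof.
  pose proof (cnorm_triang (a - c) (b - d) c d). replace (a - c + c) with a in H by ring.
  replace (b - d + d) with b in H by ring.
  pose proof (cnorm_triang (c - a) (d - b) a b). replace (c - a + a) with c in H0 by ring.
  replace (d - b + b) with d in H0 by ring.
  replace (c - a) with (- (a - c)) in H0 by ring. replace (d - b) with (- (b - d)) in H0 by ring.
  rewrite cnorm_opp in H0. apply Rabs_le. lra.
Qed.

Lemma cnorm_rot P Q c s : c ^ 2 + s ^ 2 = 1 -> cnorm (P * c + Q * s) (Q * c - P * s) = cnorm P Q.
Proof. intro H. unfold cnorm. f_equal. replace ((P * c + Q * s) ^ 2 + (Q * c - P * s) ^ 2) with
  ((P ^ 2 + Q ^ 2) * (c ^ 2 + s ^ 2)) by ring. rewrite H; ring. Qed.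

Lemma cnorm_zero a b : cnorm a b = 0 -> a = 0 /\ b = 0.
Proof. intro H. pose proof (cnorm_sq a b). rewrite H in H0. split; nra. Qed.

Lemma unit_diff v1 v2 w1 w2 : 0 < cnorm w1 w2 ->
  cnorm (v1 / cnorm v1 v2 - w1 / cnorm w1 w2) (v2 / cnorm v1 v2 - w2 / cnorm w1 w2)
  <= 2 * cnorm (v1 - w1) (v2 - w2) / cnorm w1 w2.
Proof.
  intro Hr. set (r := cnorm v1 v2). set (p := cnorm w1 w2) in *.
  assert (Hr0 : 0 <= r) by apply cnorm_nonneg.
  destruct (Req_dec r 0) as [E|E].
  - destruct (cnorm_zero v1 v2 E) as [-> ->]. rewrite E. unfold Rdiv. rewrite Rinv_0, !Rmult_0_r.
    replace (0 - w1 * / p) with (/ p * - w1) by ring. replace (0 - w2 * / p) with (/ p * - w2) by ring.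
    rewrite cnorm_scal, cnorm_opp. replace (0 - w1) with (- w1) by ring. replace (0 - w2) with (- w2) by ring.
    rewrite cnorm_opp. fold p. rewrite Rabs_right. 2: apply Rle_ge, Rlt_le, Rinv_0_lt_compat; auto.
    apply Rmult_le_reg_r with p; auto. field_simplify; lra.
  - assert (Hr1 : 0 < r) by lra.
    replace (v1 / r - w1 / p) with ((v1 / r - v1 / p) + (v1 - w1) / p) by (field; lra).
    replace (v2 / r - w2 / p) with ((v2 / r - v2 / p) + (v2 - w2) / p) by (field; lra).
    eapply Rle_trans. apply cnorm_triang.
    replace (v1 / r - v1 / p) with ((/ r - / p) * v1) by (field; lra).
    replace (v2 / r - v2 / p) with ((/ r - / p) * v2) by (field; lra).
    replace ((v1 - w1) / p) with (/ p * (v1 - w1)) by (field; lra).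
    replace ((v2 - w2) / p) with (/ p * (v2 - w2)) by (field; lra).
    rewrite !cnorm_scal. fold r.
    pose proof (cnorm_rev v1 v2 w1 w2) as Hrev. fold r p in Hrev.
    rewrite (Rabs_right (/ p)). 2: apply Rle_ge, Rlt_le, Rinv_0_lt_compat; auto.
    replace (Rabs (/ r - / p) * r) with (Rabs (r - p) / p).
    2: { replace (/ r - / p) with ((p - r) / (r * p)) by (field; lra).
         unfold Rdiv. rewrite !Rabs_mult. rewrite (Rabs_right (/ (r * p))).
         2: apply Rle_ge, Rlt_le, Rinv_0_lt_compat; nra.
         rewrite <- Rabs_Ropp. replace (- (r - p)) with (p - r) by ring. field. lra. }
    pose proof (cnorm_nonneg (v1 - w1) (v2 - w2)).
    apply Rmult_le_reg_r with p; auto. field_simplify; try lra.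
Qed.

Definition cvs (u : nat -> R) l := forall eps, eps > 0 -> exists N, forall n, (N <= n)%nat -> Rabs (u n - l) < eps.

Lemma BW1 (u : nat -> R) : (forall n, -1 <= u n <= 1) ->
  exists (phi : nat -> nat) l, (forall n, (phi n < phi (S n))%nat) /\ cvs (fun n => u (phi n)) l.
Proof.
  intro Hb.
  destruct (Bolzano_Weierstrass u (fun c => -1 <= c <= 1) (compact_P3 (-1) 1) Hb) as [l Hl].
  assert (Hch : forall N m : nat, exists p, (N <= p)%nat /\ Rabs (u p - l) < / (INR m + 1)).
  { intros N m. assert (Hpos : 0 < / (INR m + 1)) by (apply Rinv_0_lt_compat; pose proof (pos_INR m); lra).
    destruct (Hl (fun c => Rabs (c - l) < / (INR m + 1)) N) as [p [Hp1 Hp2]].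
    - exists (mkposreal _ Hpos). intros c Hc. unfold disc in Hc. simpl in Hc. auto.
    - exists p; auto. }
  set (ch := fun N m => epsilon (inhabits 0%nat) (fun p => (N <= p)%nat /\ Rabs (u p - l) < / (INR m + 1))).
  assert (Hchs : forall N m, (N <= ch N m)%nat /\ Rabs (u (ch N m) - l) < / (INR m + 1)).
  { intros N m. unfold ch. apply epsilon_spec. apply Hch. }
  set (phi := fix phi n := match n with O => ch O O | S n' => ch (S (phi n')) (S n') end).
  exists phi, l. split.
  - intro n. simpl. destruct (Hchs (S (phi n)) (S n)). lia.
  - intros eps He. destruct (INR_archimed eps 1 He) as [N0 HN0]. exists N0. intros n Hn.
    assert (Hn' : Rabs (u (phi n) - l) < / (INR n + 1)).
    { destruct n; simpl; [apply (Hchs O O) | apply (Hchs _ (S n))]. }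
    eapply Rlt_le_trans. apply Hn'.
    apply le_INR in Hn.
    assert (0 < INR n + 1) by (pose proof (pos_INR n); lra).
    apply Rmult_le_reg_l with (INR n + 1). lra. rewrite Rinv_r by lra. nra.
Qed.

Lemma cvs_sub u l (psi : nat -> nat) : (forall n, (psi n < psi (S n))%nat) -> cvs u l -> cvs (fun n => u (psi n)) l.
Proof.
  intros Hp Hc eps He. destruct (Hc eps He) as [N HN]. exists N. intros n Hn. apply HN.
  assert (forall m, (m <= psi m)%nat). { induction m. lia. specialize (Hp m). lia. }
  specialize (H n). lia.
Qed.

Lemma BW2 (a b : nat -> R) : (forall n, -1 <= a n <= 1) -> (forall n, -1 <= b n <= 1) ->
  exists (phi : nat -> nat) l1 l2, (forall n, (phi n < phi (S n))%nat) /\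
     cvs (fun n => a (phi n)) l1 /\ cvs (fun n => b (phi n)) l2.
Proof.
  intros Ha Hb. destruct (BW1 a Ha) as [p1 [l1 [Hp1 Hc1]]].
  destruct (BW1 (fun n => b (p1 n)) (fun n => Hb (p1 n))) as [p2 [l2 [Hp2 Hc2]]].
  exists (fun n => p1 (p2 n)), l1, l2. split; [|split].
  - intro n. assert (forall m m', (m < m')%nat -> (p1 m < p1 m')%nat).
    { intros m m' H. induction H. apply Hp1. specialize (Hp1 m0). lia. }
    apply H. apply Hp2.
  - apply (cvs_sub (fun n => a (p1 n)) l1 p2 Hp2 Hc1).
  - auto.
Qed.

Lemma inH1_facts f : in_H1 f -> Cts f /\ Per f /\ zsummable (H1_weight f zero_fun).
Proof. intros [H1 [H2 H3]]. split; [apply Cts_of_continuity; auto|split; auto]. Qed.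

Lemma hk_summable x y kz : in_H1 x -> in_H1 y -> zsummable (hk x y kz).
Proof.
  intros Hx Hy. destruct (inH1_facts x Hx) as (_ & _ & Sx). destruct (inH1_facts y Hy) as (_ & _ & Sy).
  pose proof (pow2_ge_0 (IZR kz)).
  apply (summable_le2 _ (H1_weight x zero_fun) (H1_weight y zero_fun) (4 * (1 + IZR kz ^ 2))); auto.
  lra. apply hk_nonneg. apply H1w_nonneg. apply H1w_nonneg.
  intro m. unfold hk, H1_weight. pose proof (cabs2_le x y m).
  pose proof (cabs2_nonneg x y m). pose proof (cabs2_nonneg x zero_fun m). pose proof (cabs2_nonneg y zero_fun m).
  assert ((IZR m + IZR kz) ^ 2 <= 2 * (1 + IZR kz ^ 2) * (1 + IZR m ^ 2)).
  { pose proof (pow2_ge_0 (IZR m - IZR kz)). pose proof (pow2_ge_0 (IZR m * IZR kz)). nra. }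
  assert (0 <= (IZR m + IZR kz) ^ 2) by apply pow2_ge_0.
  nra.
Qed.

Definition kinz (z : R -> R) m := (IZR m + 0) ^ 2 * cabs2 z zero_fun m.

Lemma kinz_nonneg z m : 0 <= kinz z m.
Proof. unfold kinz. apply Rmult_le_pos. apply pow2_ge_0. apply cabs2_nonneg. Qed.

Lemma kinz_summable z : in_H1 z -> zsummable (kinz z).
Proof.
  intros Hz. destruct (inH1_facts z Hz) as (_ & _ & Sz).
  apply (summable_le _ (H1_weight z zero_fun) 1); auto.
  lra. apply kinz_nonneg. apply H1w_nonneg.
  intro m. unfold kinz, H1_weight. pose proof (cabs2_nonneg z zero_fun m).
  rewrite Rplus_0_r. pose proof (pow2_ge_0 (IZR m)). nra.
Qed.

Lemma kin_eq x y kz : kin (IZR kz) x y = 2 * PI * zsum (hk x y kz).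
Proof. reflexivity. Qed.
Lemma kinz_eq z : kin 0 z zero_fun = 2 * PI * zsum (kinz z).
Proof. reflexivity. Qed.

Lemma Rmax_alt a b : Rmax a b = (a + b + Rabs (a - b)) / 2.
Proof. unfold Rmax. destruct (Rle_dec a b).
  - rewrite Rabs_left1 by lra. field.
  - rewrite Rabs_right by lra. field. Qed.

Lemma U_nonneg N q M : in_Lambda N q -> 0 <= Rint (U_trunc N q M).
Proof.
  intro HL.
  assert (HC : forall i, (i < N)%nat -> Cts (lx q i) /\ Cts (ly q i) /\ Cts (lz q i)).
  { intros i Hi. destruct (HL i Hi) as (A1 & A2 & A3).
    split; [|split]; apply Cts_of_continuity; apply A1 || apply A2 || apply A3. }
  assert (Hpos : 0 < / INR (S M)) by (apply Rinv_0_lt_compat, lt_0_INR; lia).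
  assert (CU : Cts (U_trunc N q M)).
  { unfold U_trunc. apply (Cts_rsum N (fun i t => rsum N (fun j =>
       if Nat.ltb i j then / Rmax (dist3 q i j t) (/ INR (S M)) else 0))).
    intros i Hi. apply (Cts_rsum N (fun j t => if Nat.ltb i j then / Rmax (dist3 q i j t) (/ INR (S M)) else 0)).
    intros j Hj. destruct (Nat.ltb i j); [|intro; apply c_const].
    destruct (HC i Hi) as (Xi & Yi & Zi). destruct (HC j Hj) as (Xj & Yj & Zj).
    apply (Cts_ext (fun t => / ((dist3 q i j t + / INR (S M) + Rabs (dist3 q i j t - / INR (S M))) / 2))).
    { intro t. rewrite Rmax_alt. auto. }
    intro t. apply (continuous_Rinv_comp (fun t => (dist3 q i j t + / INR (S M) + Rabs (dist3 q i j t - / INR (S M))) / 2)).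
    - unfold dist3. cts.
    - pose proof (Rabs_pos (dist3 q i j t - / INR (S M))). pose proof (sqrt_pos ((lx q i t - lx q j t) ^ 2 + (ly q i t - ly q j t) ^ 2 + (lz q i t - lz q j t) ^ 2)).
      apply Rgt_not_eq. unfold dist3 in *. lra. }
  rewrite Rint_RInt; auto. apply RI_nonneg; auto. pose proof PI_RGT_0; lra.
  intros t _. unfold U_trunc. apply rsum_nonneg. intros i _. apply rsum_nonneg. intros j _.
  destruct (Nat.ltb i j); [|lra]. apply Rlt_le, Rinv_0_lt_compat.
  eapply Rlt_le_trans. apply Hpos. apply Rmax_r.
Qed.

Lemma action_bounds N q kz C : in_Lambda N q -> action_trunc (IZR kz) N q 0 <= C ->
  0 <= C /\ forall i, (i < N)%nat ->
    zsum (hk (lx q i) (ly q i) kz) <= C / PI /\ zsum (kinz (lz q i)) <= C / PI.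
Proof.
  intros HL HA. unfold action_trunc in HA.
  pose proof (U_nonneg N q 0 HL) as HU.
  pose proof PI_RGT_0 as Hpi.
  assert (Hterm : forall i, (i < N)%nat -> 0 <= zsum (hk (lx q i) (ly q i) kz) /\ 0 <= zsum (kinz (lz q i))).
  { intros i Hi. destruct (HL i Hi) as (A1 & A2 & A3). split.
    - apply (zsum_summable _ (hk_nonneg _ _ kz)). apply hk_summable; auto.
    - apply (zsum_summable _ (kinz_nonneg _)). apply kinz_summable; auto. }
  set (T := fun i => kin (IZR kz) (lx q i) (ly q i) + kin 0 (lz q i) zero_fun) in *.
  assert (HT : forall i, (i < N)%nat -> 0 <= T i).
  { intros i Hi. unfold T. rewrite kin_eq, kinz_eq. destruct (Hterm i Hi). nra. }
  pose proof (rsum_nonneg N T HT).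
  split. lra.
  intros i Hi. pose proof (rsum_ge_term N T i HT Hi).
  assert (ET : T i = 2 * PI * zsum (hk (lx q i) (ly q i) kz) + 2 * PI * zsum (kinz (lz q i))) by (unfold T; rewrite kin_eq, kinz_eq; auto).
  destruct (Hterm i Hi).
  assert (E : C / PI = / (2 * PI) * (2 * C)) by (field; apply PI_neq0).
  rewrite E.
  assert (HP1 : 0 <= PI * zsum (hk (lx q i) (ly q i) kz)) by nra.
  assert (HP2 : 0 <= PI * zsum (kinz (lz q i))) by nra.
  split; apply Rmult_le_reg_l with (2 * PI); try lra;
  rewrite <- Rmult_assoc, Rinv_r, Rmult_1_l; lra.
Qed.

Lemma fs_0 f : Cts f -> fs f 0 = 0.
Proof. intro H. rewrite fs_RInt; auto. rewrite (RIext _ (fun _ => 0)). rewrite RI_const. ring.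
  intros. simpl. rewrite Rmult_0_l, sin_0. ring. Qed.

Lemma fc_0 f : Cts f -> fc f 0 = mean f.
Proof. intro H. rewrite fc_RInt; auto. unfold mean. rewrite Rint_RInt; auto. f_equal.
  apply RIext. intros. simpl. rewrite Rmult_0_l, cos_0. ring. Qed.

Lemma z_bound z K : in_H1 z -> fc z 0 = 0 -> zsum (kinz z) <= K -> H1norm_real z <= sqrt (2 * PI * (2 * K)).
Proof.
  intros Hz H0 HK. destruct (inH1_facts z Hz) as (Cz & Pz & Sz).
  unfold H1norm_real, H1sq. apply sqrt_le_1_alt.
  pose proof PI_RGT_0.
  assert (zsum (H1_weight z zero_fun) <= 2 * zsum (kinz z)).
  { apply (summable_le _ (kinz z) 2); auto. lra. apply H1w_nonneg. apply kinz_nonneg. apply kinz_summable; auto.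
    intro m. unfold H1_weight, kinz. rewrite Rplus_0_r. pose proof (cabs2_nonneg z zero_fun m).
    destruct (Z.eq_dec m 0) as [->|Hm].
    - rewrite cabs2_zero, H0, fs_0; auto. simpl. lra.
    - assert (1 <= IZR m ^ 2).
      { destruct (Z_le_gt_dec 1 m) as [h|h]. apply IZR_le in h. nra.
        assert (h' : (m <= -1)%Z) by lia. apply IZR_le in h'. nra. }
      nra. }
  nra.
Qed.

Lemma mean_shift z z0 a : Cts z0 -> Per z0 -> mean z0 = 0 -> (forall t, z t = z0 (t + a)) -> Cts z -> fc z 0 = 0.
Proof.
  intros C0 P0 M0 E Cz. rewrite fc_0; auto. unfold mean in *. rewrite Rint_RInt in *; auto.
  rewrite (RIext z (fun t => z0 (t + a))). rewrite RI_shift; auto. intros; auto.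
Qed.

Lemma H1w_xy_bound x y kz m : H1_weight x y m <=
  (if Z.eq_dec m (- kz) then (1 + IZR kz ^ 2) * cabs2 x y (- kz) else 0) + (3 + 2 * IZR kz ^ 2) * hk x y kz m.
Proof.
  unfold H1_weight, hk. pose proof (cabs2_nonneg x y m). pose proof (pow2_ge_0 (IZR kz)).
  destruct (Z.eq_dec m (- kz)) as [->|Hm].
  - rewrite opp_IZR. pose proof (pow2_ge_0 (- IZR kz + IZR kz)). nra.
  - assert (Hu : 1 <= (IZR m + IZR kz) ^ 2).
    { rewrite <- plus_IZR. destruct (Z_le_gt_dec 1 (m + kz)) as [h|h].
      + apply IZR_le in h. nra.
      + assert (h' : (m + kz <= -1)%Z) by lia. apply IZR_le in h'. nra. }
    assert (1 + IZR m ^ 2 <= (3 + 2 * IZR kz ^ 2) * (IZR m + IZR kz) ^ 2).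
    { pose proof (pow2_ge_0 (IZR m + 2 * IZR kz)). nra. }
    rewrite Rplus_0_l. rewrite <- Rmult_assoc. apply Rmult_le_compat_r; auto.
Qed.

Lemma H1sq_xy_bound x y kz Hb : in_H1 x -> in_H1 y -> zsum (hk x y kz) <= Hb ->
  H1sq x y <= 2 * PI * ((1 + IZR kz ^ 2) * cnorm (PP x y kz) (QQ x y kz) ^ 2 + (3 + 2 * IZR kz ^ 2) * Hb).
Proof.
  intros Hx Hy HH. unfold H1sq. pose proof PI_RGT_0.
  apply Rmult_le_compat_l. lra.
  assert (Sh : zsummable (hk x y kz)) by (apply hk_summable; auto).
  destruct (zsum_summable _ (hk_nonneg x y kz) Sh) as [Hp _].
  assert (E : cabs2 x y (- kz) = cnorm (PP x y kz) (QQ x y kz) ^ 2).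
  { rewrite cnorm_sq. reflexivity. }
  rewrite <- E. pose proof (cabs2_nonneg x y (- kz)). pose proof (pow2_ge_0 (IZR kz)).
  apply (zsum_bound _ _ (H1w_nonneg x y)).
  intro M. eapply Rle_trans. apply zpart_le. apply (H1w_xy_bound x y kz).
  rewrite zpart_plus, zpart_scal, zpart_delta.
  specialize (Hp M).
  assert (zpart (hk x y kz) M <= Hb) by lra.
  assert (P1 : 0 <= (1 + IZR kz ^ 2) * cabs2 x y (- kz)) by (apply Rmult_le_pos; lra).
  assert (P2 : (3 + 2 * IZR kz ^ 2) * zpart (hk x y kz) M <= (3 + 2 * IZR kz ^ 2) * Hb) by (apply Rmult_le_compat_l; lra).
  destruct (Z_le_dec _ _); lra.
Qed.

(* the approximation of zeta by its -k mode *)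
Lemma near_mode x y kz Hb t : in_H1 x -> in_H1 y -> kz <> 0%Z -> zsum (hk x y kz) <= Hb ->
  cnorm (x t - (PP x y kz * cos (IZR kz * t) + QQ x y kz * sin (IZR kz * t)))
        (y t - (QQ x y kz * cos (IZR kz * t) - PP x y kz * sin (IZR kz * t)))
  <= 2 * (5 / 2 + (3 + 2 * IZR kz ^ 2) / 2 * Hb).
Proof.
  intros Hx Hy Hk HH.
  destruct (inH1_facts x Hx) as (Cx & Px & _). destruct (inH1_facts y Hy) as (Cy & Py & _).
  assert (Sh : zsummable (hk x y kz)) by (apply hk_summable; auto).
  destruct (zsum_summable _ (hk_nonneg x y kz) Sh) as [Hp _].
  destruct (zeta_approx x y kz Hk Cx Cy Hb Px Py ltac:(intro M; specialize (Hp M); lra) t) as [A1 A2].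
  unfold gx, gy in *.
  replace (QQ x y kz * cos (IZR kz * t) + - PP x y kz * sin (IZR kz * t))
    with (QQ x y kz * cos (IZR kz * t) - PP x y kz * sin (IZR kz * t)) in A2 by ring.
  eapply Rle_trans. apply cnorm_le_abs. lra.
Qed.

Lemma near_abs x y kz Hb t : in_H1 x -> in_H1 y -> kz <> 0%Z -> zsum (hk x y kz) <= Hb ->
  Rabs (cnorm (x t) (y t) - cnorm (PP x y kz) (QQ x y kz)) <= 2 * (5 / 2 + (3 + 2 * IZR kz ^ 2) / 2 * Hb).
Proof.
  intros. rewrite <- (cnorm_rot (PP x y kz) (QQ x y kz) (cos (IZR kz * t)) (sin (IZR kz * t))).
  eapply Rle_trans. apply cnorm_rev.
  eapply Rle_trans. 2: apply (near_mode x y kz Hb t); auto. right. f_equal; ring.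
  pose proof (sin2_cos2 (IZR kz * t)). unfold Rsqr in H3. lra.
Qed.

Lemma z_bound_sq z K : in_H1 z -> fc z 0 = 0 -> zsum (kinz z) <= K -> H1sq z zero_fun <= 2 * PI * (2 * K).
Proof.
  intros Hz H0 HK. destruct (inH1_facts z Hz) as (Cz & Pz & Sz).
  unfold H1sq.
  pose proof PI_RGT_0.
  assert (zsum (H1_weight z zero_fun) <= 2 * zsum (kinz z)).
  { apply (summable_le _ (kinz z) 2); auto. lra. apply H1w_nonneg. apply kinz_nonneg. apply kinz_summable; auto.
    intro m. unfold H1_weight, kinz. rewrite Rplus_0_r. pose proof (cabs2_nonneg z zero_fun m).
    destruct (Z.eq_dec m 0) as [->|Hm].
    - rewrite cabs2_zero, H0, fs_0; auto. simpl. lra.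
    - assert (1 <= IZR m ^ 2).
      { destruct (Z_le_gt_dec 1 m) as [h|h]. apply IZR_le in h. nra.
        assert (h' : (m <= -1)%Z) by lia. apply IZR_le in h'. nra. }
      nra. }
  nra.
Qed.

Lemma eq_of_eps x y : (forall eps, eps > 0 -> Rabs (x - y) < eps) -> x = y.
Proof. intro H. destruct (Req_dec x y); auto. exfalso.
  assert (0 < Rabs (x - y)) by (apply Rabs_pos_lt; lra). specialize (H _ H1). lra. Qed.

Lemma div_bound P r : Rabs P <= r -> -1 <= P / r <= 1.
Proof. intro H. destruct (Req_dec r 0) as [->|Hr].
  - unfold Rdiv. rewrite Rinv_0, Rmult_0_r. lra.
  - assert (0 < r) by (pose proof (Rabs_pos P); lra).
    assert (Rabs (P / r) <= 1).
    { unfold Rdiv. rewrite Rabs_mult, (Rabs_right (/ r)). 2: apply Rle_ge, Rlt_le, Rinv_0_lt_compat; auto.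
      apply Rmult_le_reg_r with r; auto. rewrite Rmult_assoc, Rinv_l; lra. }
    apply Rabs_le_between; auto. Qed.

Theorem lemma5p2 (N : nat) (HN : (2 <= N)%nat) (k : nat) (Hk1 : (1 <= k)%nat)
  (Hk2 : (k <= N - 1)%nat) (q : nat -> loop)
  (Hlam : forall n, in_Lambda N (q n))
  (Hchor : forall n, simple_choreographic N (q n))
  (Hmean : forall n, mean (lz (q n) 0) = 0)
  (Hnorm : forall B, exists n0, forall n, (n0 <= n)%nat -> H1norm_loop N (q n) > B)
  (Hact : exists C, forall n M, action_trunc (INR k) N (q n) M <= C) :
  (* (a) *)
  (exists B, forall n i, (i < N)%nat -> H1norm_real (lz (q n) i) <= B) /\
  (* (b) *)
  (forall i, (i < N)%nat -> forall B, exists n0, forall n t, (n0 <= n)%nat ->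
      cnorm (lx (q n) i t) (ly (q n) i t) > B) /\
  (* (c) *)
  (exists (phi : nat -> nat) (u1 u2 : nat -> R),
      (forall n, (phi n < phi (S n))%nat) /\
      (forall i, (i < N)%nat -> cnorm (u1 i) (u2 i) = 1) /\
      (forall i, (i < N)%nat -> forall eps, eps > 0 -> exists n0, forall n t, (n0 <= n)%nat ->
         let x := lx (q (phi n)) i t in
         let y := ly (q (phi n)) i t in
         let r := cnorm x y in
         let c := cos (INR k * t) in
         let s := sin (INR k * t) in
         cnorm (x / r - (c * u1 i + s * u2 i)) (y / r - (c * u2 i - s * u1 i)) < eps)).
Proof.
  destruct Hact as [C HC].
  set (kz := Z.of_nat k).
  assert (Hkz : kz <> 0%Z) by (unfold kz; lia).
  assert (HkR : INR k = IZR kz) by (unfold kz; apply INR_IZR_INZ).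
  rewrite HkR in HC |- *.
  pose proof PI_RGT_0 as Hpi.
  assert (HN0 : (0 < N)%nat) by lia.
  assert (AB : forall n, 0 <= C /\ forall i, (i < N)%nat ->
     zsum (hk (lx (q n) i) (ly (q n) i) kz) <= C / PI /\ zsum (kinz (lz (q n) i)) <= C / PI).
  { intro n. apply action_bounds; auto. }
  assert (HC0 : 0 <= C) by apply (AB 0%nat).
  set (Hb := C / PI).
  assert (HHb : 0 <= Hb) by (unfold Hb; apply Rmult_le_pos; [lra | left; apply Rinv_0_lt_compat; lra]).
  set (B0 := 2 * (5 / 2 + (3 + 2 * IZR kz ^ 2) / 2 * Hb)).
  assert (HB0 : 0 <= B0) by (unfold B0; pose proof (pow2_ge_0 (IZR kz)); nra).
  set (a := fun i : nat => 2 * PI * INR i / INR N).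
  assert (Hsh : forall n i t, (i < N)%nat ->
     lx (q n) i t = lx (q n) 0 (t + a i) /\ ly (q n) i t = ly (q n) 0 (t + a i) /\
     lz (q n) i t = lz (q n) 0 (t + a i)).
  { intros n i t Hi. apply (Hchor n i t Hi). }
  assert (HL : forall n i, (i < N)%nat -> in_H1 (lx (q n) i) /\ in_H1 (ly (q n) i) /\ in_H1 (lz (q n) i)).
  { intros n i Hi. apply (Hlam n i Hi). }
  set (rho := fun n i => cnorm (PP (lx (q n) i) (ly (q n) i) kz) (QQ (lx (q n) i) (ly (q n) i) kz)).
  assert (NA : forall n i t, (i < N)%nat -> Rabs (cnorm (lx (q n) i t) (ly (q n) i t) - rho n i) <= B0).
  { intros n i t Hi. destruct (HL n i Hi) as (A1 & A2 & _). apply near_abs; auto. apply (AB n). auto. }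
  assert (Hrho_i : forall n i, (i < N)%nat -> rho n i <= rho n 0%nat + 2 * B0).
  { intros n i Hi. pose proof (NA n i 0 Hi). pose proof (NA n 0%nat (a i) HN0).
    destruct (Hsh n i 0 Hi) as (E1 & E2 & _). rewrite E1, E2, Rplus_0_l in H.
    apply Rabs_le_between in H. apply Rabs_le_between in H0. lra. }
  assert (Hfz : forall n i, (i < N)%nat -> fc (lz (q n) i) 0 = 0).
  { intros n i Hi. destruct (HL n 0%nat HN0) as (_ & _ & Z0). destruct (inH1_facts _ Z0) as (CZ0 & PZ0 & _).
    destruct (HL n i Hi) as (_ & _ & Zi). destruct (inH1_facts _ Zi) as (CZi & _ & _).
    apply (mean_shift _ (lz (q n) 0) (a i)); auto. intro t. apply (Hsh n i t Hi). }
  split.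
  { exists (sqrt (2 * PI * (2 * Hb))). intros n i Hi. destruct (HL n i Hi) as (_ & _ & Zi).
    apply z_bound; auto. apply (AB n). auto. }
  set (K := fun s => 2 * PI * ((1 + IZR kz ^ 2) * (s + 2 * B0) ^ 2 + (3 + 2 * IZR kz ^ 2) * Hb) + 2 * PI * (2 * Hb)).
  assert (HK : forall n, H1norm_loop N (q n) <= sqrt (INR N * K (rho n 0%nat))).
  { intro n. unfold H1norm_loop. apply sqrt_le_1_alt. apply rsum_le_const. intros i Hi.
    destruct (HL n i Hi) as (A1 & A2 & A3).
    pose proof (H1sq_xy_bound _ _ kz Hb A1 A2 ltac:(apply (AB n); auto)) as B1.
    pose proof (z_bound_sq _ Hb A3 (Hfz n i Hi) ltac:(apply (AB n); auto)) as B2.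
    fold (rho n i) in B1.
    assert (rho n i ^ 2 <= (rho n 0%nat + 2 * B0) ^ 2).
    { pose proof (Hrho_i n i Hi). pose proof (cnorm_nonneg (PP (lx (q n) i) (ly (q n) i) kz) (QQ (lx (q n) i) (ly (q n) i) kz)).
      fold (rho n i) in H0. nra. }
    unfold K. pose proof (pow2_ge_0 (IZR kz)).
    assert ((1 + IZR kz ^ 2) * rho n i ^ 2 <= (1 + IZR kz ^ 2) * (rho n 0%nat + 2 * B0) ^ 2) by (apply Rmult_le_compat_l; lra).
    nra. }
  assert (Hinf : forall B, exists n0, forall n, (n0 <= n)%nat -> rho n 0%nat > B).
  { intro B. set (B1 := Rmax B 0).
    destruct (Hnorm (sqrt (INR N * K B1))) as [n0 Hn0]. exists n0. intros n Hn.
    specialize (Hn0 n Hn). specialize (HK n).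
    destruct (Rle_lt_dec (rho n 0%nat) B) as [h|h]; auto. exfalso.
    assert (0 <= rho n 0%nat) by apply cnorm_nonneg.
    assert (rho n 0%nat <= B1) by (unfold B1; pose proof (Rmax_l B 0); lra).
    assert (0 <= B1) by (unfold B1; apply Rmax_r).
    assert (K (rho n 0%nat) <= K B1).
    { unfold K. pose proof (pow2_ge_0 (IZR kz)).
      assert ((rho n 0%nat + 2 * B0) ^ 2 <= (B1 + 2 * B0) ^ 2) by nra.
      assert ((1 + IZR kz ^ 2) * (rho n 0%nat + 2 * B0) ^ 2 <= (1 + IZR kz ^ 2) * (B1 + 2 * B0) ^ 2) by (apply Rmult_le_compat_l; lra).
      nra. }
    assert (sqrt (INR N * K (rho n 0%nat)) <= sqrt (INR N * K B1)).
    { apply sqrt_le_1_alt. apply Rmult_le_compat_l; auto. apply pos_INR. }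
    lra. }
  split.
  { intros i Hi B. destruct (Hinf (B + B0)) as [n0 Hn0]. exists n0. intros n t Hn.
    destruct (Hsh n i t Hi) as (E1 & E2 & _). rewrite E1, E2.
    pose proof (NA n 0%nat (t + a i) HN0). apply Rabs_le_between in H. specialize (Hn0 n Hn). lra. }
  set (Pn := fun n => PP (lx (q n) 0) (ly (q n) 0) kz).
  set (Qn := fun n => QQ (lx (q n) 0) (ly (q n) 0) kz).
  set (an := fun n => Pn n / rho n 0%nat).
  set (bn := fun n => Qn n / rho n 0%nat).
  assert (Ha : forall n, -1 <= an n <= 1) by (intro n; apply div_bound; apply abs_le_cnorm1).
  assert (Hb' : forall n, -1 <= bn n <= 1) by (intro n; apply div_bound; apply abs_le_cnorm2).
  destruct (BW2 an bn Ha Hb') as [phi [l1 [l2 [Hphi [Ca Cb]]]]].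
  assert (Hphin : forall n, (n <= phi n)%nat).
  { induction n. lia. specialize (Hphi n). lia. }
  assert (Hunit : forall n, 0 < rho n 0%nat -> cnorm (an n) (bn n) = 1).
  { intros n Hr. unfold an, bn. unfold Rdiv. rewrite (Rmult_comm (Pn n)), (Rmult_comm (Qn n)).
    rewrite cnorm_scal. change (cnorm (Pn n) (Qn n)) with (rho n 0%nat). rewrite Rabs_right. field; lra.
    apply Rle_ge, Rlt_le, Rinv_0_lt_compat; auto. }
  assert (Hl : cnorm l1 l2 = 1).
  { apply eq_of_eps. intros eps He.
    destruct (Ca (eps / 2)) as [n1 Hn1]. lra. destruct (Cb (eps / 2)) as [n2 Hn2]. lra.
    destruct (Hinf 0) as [n3 Hn3].
    set (m := Nat.max n1 (Nat.max n2 n3)).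
    specialize (Hn1 m ltac:(unfold m; lia)). specialize (Hn2 m ltac:(unfold m; lia)).
    specialize (Hn3 (phi m) ltac:(pose proof (Hphin m); unfold m in *; lia)).
    rewrite <- (Hunit (phi m)) by lra.
    eapply Rle_lt_trans. apply cnorm_rev. eapply Rle_lt_trans. apply cnorm_le_abs.
    rewrite (Rabs_minus_sym l1), (Rabs_minus_sym l2). lra. }
  assert (Hcs : forall z, cos z ^ 2 + sin z ^ 2 = 1).
  { intro z. pose proof (sin2_cos2 z). unfold Rsqr in H. lra. }
  exists phi, (fun i => l1 * cos (IZR kz * a i) + l2 * sin (IZR kz * a i)),
              (fun i => l2 * cos (IZR kz * a i) - l1 * sin (IZR kz * a i)).
  split; [auto|split].
  { intros i Hi. rewrite cnorm_rot; auto. }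
  intros i Hi eps He.
  destruct (Ca (eps / 3)) as [n1 Hn1]. lra. destruct (Cb (eps / 3)) as [n2 Hn2]. lra.
  destruct (Hinf (6 * B0 / eps)) as [n3 Hn3].
  exists (Nat.max n1 (Nat.max n2 n3)). intros n t Hn. cbv zeta.
  specialize (Hn1 n ltac:(lia)). specialize (Hn2 n ltac:(lia)).
  specialize (Hn3 (phi n) ltac:(pose proof (Hphin n); lia)).
  set (m := phi n) in *.
  destruct (Hsh m i t Hi) as (E1 & E2 & _). rewrite E1, E2.
  set (tau := t + a i).
  set (X := lx (q m) 0 tau). set (Y := ly (q m) 0 tau).
  set (rh := rho m 0%nat) in *.
  assert (Hrh : 0 < rh).
  { assert (0 <= 6 * B0 / eps) by (apply Rmult_le_pos; [lra | left; apply Rinv_0_lt_compat; lra]). lra. }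
  set (w1 := Pn m * cos (IZR kz * tau) + Qn m * sin (IZR kz * tau)).
  set (w2 := Qn m * cos (IZR kz * tau) - Pn m * sin (IZR kz * tau)).
  assert (Hw : cnorm w1 w2 = rh) by (unfold w1, w2; rewrite cnorm_rot; auto).
  assert (Hnear : cnorm (X - w1) (Y - w2) <= B0).
  { destruct (HL m 0%nat HN0) as (A1 & A2 & _). unfold X, Y, w1, w2, Pn, Qn, B0.
    apply near_mode; auto. apply (AB m). auto. }
  pose proof (unit_diff X Y w1 w2 ltac:(lra)) as U. rewrite Hw in U.
  assert (U' : 2 * cnorm (X - w1) (Y - w2) / rh < eps / 3).
  { assert (H6 : 6 * B0 < rh * eps).
    { apply (Rmult_lt_compat_r eps) in Hn3; auto. unfold Rdiv in Hn3. rewrite Rmult_assoc, Rinv_l in Hn3; lra. }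
    apply Rmult_lt_reg_r with rh; auto. unfold Rdiv. rewrite Rmult_assoc, Rinv_l by lra.
    nra. }
  replace (X / cnorm X Y - (cos (IZR kz * t) * (l1 * cos (IZR kz * a i) + l2 * sin (IZR kz * a i)) +
            sin (IZR kz * t) * (l2 * cos (IZR kz * a i) - l1 * sin (IZR kz * a i))))
    with ((X / cnorm X Y - w1 / rh) + ((an m - l1) * cos (IZR kz * tau) + (bn m - l2) * sin (IZR kz * tau))).
  2: { unfold w1, an, bn, tau. change (rho m 0%nat) with rh. unfold Rdiv. rewrite Rmult_plus_distr_l, cos_plus, sin_plus. ring. }
  replace (Y / cnorm X Y - (cos (IZR kz * t) * (l2 * cos (IZR kz * a i) - l1 * sin (IZR kz * a i)) -
            sin (IZR kz * t) * (l1 * cos (IZR kz * a i) + l2 * sin (IZR kz * a i))))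
    with ((Y / cnorm X Y - w2 / rh) + ((bn m - l2) * cos (IZR kz * tau) - (an m - l1) * sin (IZR kz * tau))).
  2: { unfold w2, an, bn, tau. change (rho m 0%nat) with rh. unfold Rdiv. rewrite Rmult_plus_distr_l, cos_plus, sin_plus. ring. }
  eapply Rle_lt_trans. apply cnorm_triang.
  rewrite cnorm_rot; auto.
  pose proof (cnorm_le_abs (an m - l1) (bn m - l2)). lra.
Qed.
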